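(* Let $x=(x_1,\dots,x_n)$ be a vector of variables, $f=(f_1,\dots,f_n)$ a vector of differential-free terms, and let $y=(y_1,\dots,y_n)$ be fresh variables (not occurring in $f$, in the domain constraints below, or in $e$). Then all instances of the following three formulas are valid: (Uniq) $\big(\langle x'=f(x)\,\&\,Q_1\rangle P\big)\wedge\big(\langle x'=f(x)\,\&\,Q_2\rangle P\big)\leftrightarrow \langle x'=f(x)\,\&\,Q_1\wedge Q_2\rangle P$, for semianalytic formulas $Q_1,Q_2$ and any formula $P$; (Cont) $x=y\rightarrow\big(\langle x'=f(x)\,\&\,e>0\rangle\, x\neq y\;\leftrightarrow\; e>0\big)$, for any differential-free term $e$, provided that the ODE locally evolves $x$, i.e. in every state the value of the vector $f$ is not the zero vector; (Dadj) $\langle x'=f(x)\,\&\,Q(x)\rangle\, x=y\;\leftrightarrow\;\langle y'=-f(y)\,\&\,Q(y)\rangle\, y=x$, for a semianalytic formula $Q(x)$, where $f(y)$, $Q(y)$ denote the results of replacing $x$ by $y$.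
   Context: Variables are real-valued; each variable $x$ has a differential variable $x'$. A state is a map from variables to $\mathbb{R}$. Terms are built from variables, rational constants, $+$, $\cdot$ and finitely many fixed function symbols interpreted as $C^\infty$ functions $\mathbb{R}^k\to\mathbb{R}$, evaluated as usual; differential-free terms contain no differential variables. Semianalytic formulas are built from comparisons $e\sim\tilde e$ ($\sim\in\{=,\ge,>\}$) of differential-free terms by $\wedge,\vee,\neg$. Formulas additionally allow quantifiers and modalities $[\alpha]\phi$, $\langle\alpha\rangle\phi$ for ODEs $\alpha \equiv x'=f(x)\,\&\,Q$ ($Q$ semianalytic; omitted if $Q$ is true). For vectors, $x=y$ abbreviates $\bigwedge_i x_i=y_i$ and $x\neq y$ is its negation. Semantics of ODEs: $(\omega,\nu)\in[\![x'=f(x)\&Q]\!]$ iff there are $T\ge0$ and $\varphi:[0,T]\to$ states with $\varphi(0)=\omega$ on all variables except $x'$, $\varphi(T)=\nu$, and for all $\zeta\in[0,T]$: $\varphi(\zeta)$ satisfies $x'=f(x)\wedge Q$, $\varphi(\zeta)$ agrees with $\varphi(0)$ on all variables other than $x,x'$, and, if $T>0$, $t\mapsto\varphi(t)(x)$ is differentiable at $\zeta$ with derivative $\varphi(\zeta)(x')$. Then $\omega\models[\alpha]\phi$ iff $\nu\models\phi$ for all $\nu$ with $(\omega,\nu)\in[\![\alpha]\!]$, and $\omega\models\langle\alpha\rangle\phi$ iff $\nu\models\phi$ for some such $\nu$. A formula is valid if true in all states. *)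

(* Defs.v *)
From Stdlib Require Import Reals QArith Qreals List.
From Coquelicot Require Import Coquelicot.
Open Scope R_scope.

(* Smooth (C^oo) functions R^k -> R.  A point of R^k is represented as a
   map nat -> R of which only the first k coordinates matter.          *)

Definition cupd (v : nat -> R) (i : nat) (h : R) : nat -> R :=
  fun j => if Nat.eqb j i then h else v j.

Definition cont_k (k : nat) (g : (nat -> R) -> R) : Prop :=
  forall v eps, 0 < eps -> exists del, 0 < del /\
    forall w, (forall i, (i < k)%nat -> Rabs (w i - v i) < del) ->
      Rabs (g w - g v) < eps.

Definition pderiv (i : nat) (g : (nat -> R) -> R) : (nat -> R) -> R :=
  fun v => Derive (fun h => g (cupd v i h)) (v i).

Fixpoint Ck (m k : nat) (g : (nat -> R) -> R) : Prop :=
  cont_k k g /\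
  match m with
  | O => True
  | S m' => forall i, (i < k)%nat ->
      (forall v, ex_derive (fun h => g (cupd v i h)) (v i)) /\
      Ck m' k (pderiv i g)
  end.

Definition smooth (k : nat) (g : (nat -> R) -> R) : Prop :=
  (forall v w, (forall i, (i < k)%nat -> v i = w i) -> g v = g w) /\
  forall m, Ck m k g.

(* Pl i = the variable x_i, Df i = its differential variable x_i' *)
Inductive var : Type := Pl (i : nat) | Df (i : nat).

Definition var_eqb (a b : var) : bool :=
  match a, b with
  | Pl i, Pl j => Nat.eqb i j
  | Df i, Df j => Nat.eqb i j
  | _, _ => false
  end.

Definition state := var -> R.

Definition supd (w : state) (v : var) (r : R) : state :=
  fun u => if var_eqb u v then r else w u.

(* Terms.  Function symbols are natural numbers; a signature gives their
   arities, an interpretation gives a C^oo function of that arity.     *)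

Inductive dterm : Type :=
| TVar (v : var)
| TConst (q : Q)
| TPlus (a b : dterm)
| TTimes (a b : dterm)
| TFn (s : nat) (args : list dterm).

Record dL_interp (ar : nat -> nat) : Type := {
  fn : nat -> (nat -> R) -> R;
  fn_smooth : forall s, smooth (ar s) (fn s)
}.
Arguments fn {ar} _ _ _.

Fixpoint teval {ar} (I : dL_interp ar) (w : state) (t : dterm) : R :=
  match t with
  | TVar v => w v
  | TConst q => Q2R q
  | TPlus a b => teval I w a + teval I w b
  | TTimes a b => teval I w a * teval I w b
  | TFn s args => fn I s (fun j => nth j (map (teval I w) args) 0)
  end.

Fixpoint wf_term (ar : nat -> nat) (t : dterm) : Prop :=
  match t with
  | TVar _ | TConst _ => True
  | TPlus a b | TTimes a b => wf_term ar a /\ wf_term ar b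
  | TFn s args => length args = ar s /\
      (fix go (l : list dterm) : Prop :=
         match l with nil => True | a :: l' => wf_term ar a /\ go l' end) args
  end.

Fixpoint dfree_term (t : dterm) : Prop :=
  match t with
  | TVar (Pl _) | TConst _ => True
  | TVar (Df _) => False
  | TPlus a b | TTimes a b => dfree_term a /\ dfree_term b
  | TFn _ args =>
      (fix go (l : list dterm) : Prop :=
         match l with nil => True | a :: l' => dfree_term a /\ go l' end) args
  end.

Fixpoint occurs_term (i : nat) (t : dterm) : Prop :=
  match t with
  | TVar (Pl j) | TVar (Df j) => i = j
  | TConst _ => False
  | TPlus a b | TTimes a b => occurs_term i a \/ occurs_term i b
  | TFn _ args =>
      (fix go (l : list dterm) : Prop :=
         match l with nil => False | a :: l' => occurs_term i a \/ go l' end) args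
  end.

Fixpoint ren_term (m : nat -> nat) (t : dterm) : dterm :=
  match t with
  | TVar (Pl j) => TVar (Pl (m j))
  | TVar (Df j) => TVar (Df (m j))
  | TConst q => TConst q
  | TPlus a b => TPlus (ren_term m a) (ren_term m b)
  | TTimes a b => TTimes (ren_term m a) (ren_term m b)
  | TFn s args => TFn s (map (ren_term m) args)
  end.

(* the renaming x_k |-> y_k (identity elsewhere) *)
Fixpoint lookup (xs ys : list nat) (i : nat) : nat :=
  match xs, ys with
  | x :: xs', y :: ys' => if Nat.eqb i x then y else lookup xs' ys' i
  | _, _ => i
  end.

Inductive cmp : Type := CEq | CGe | CGt.

Definition cmp_sem (c : cmp) (a b : R) : Prop :=
  match c with CEq => a = b | CGe => a >= b | CGt => a > b end.

Inductive sform : Type :=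
| SCmp (c : cmp) (a b : dterm)
| SAnd (p q : sform)
| SOr (p q : sform)
| SNot (p : sform).

Fixpoint sf_sat {ar} (I : dL_interp ar) (w : state) (p : sform) : Prop :=
  match p with
  | SCmp c a b => cmp_sem c (teval I w a) (teval I w b)
  | SAnd p q => sf_sat I w p /\ sf_sat I w q
  | SOr p q => sf_sat I w p \/ sf_sat I w q
  | SNot p => ~ sf_sat I w p
  end.

Fixpoint dfree_sf (p : sform) : Prop :=
  match p with
  | SCmp _ a b => dfree_term a /\ dfree_term b
  | SAnd p q | SOr p q => dfree_sf p /\ dfree_sf q
  | SNot p => dfree_sf p
  end.

Fixpoint wf_sf (ar : nat -> nat) (p : sform) : Prop :=
  match p with
  | SCmp _ a b => wf_term ar a /\ wf_term ar b
  | SAnd p q | SOr p q => wf_sf ar p /\ wf_sf ar q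
  | SNot p => wf_sf ar p
  end.

Fixpoint occurs_sf (i : nat) (p : sform) : Prop :=
  match p with
  | SCmp _ a b => occurs_term i a \/ occurs_term i b
  | SAnd p q | SOr p q => occurs_sf i p \/ occurs_sf i q
  | SNot p => occurs_sf i p
  end.

Fixpoint ren_sf (m : nat -> nat) (p : sform) : sform :=
  match p with
  | SCmp c a b => SCmp c (ren_term m a) (ren_term m b)
  | SAnd p q => SAnd (ren_sf m p) (ren_sf m q)
  | SOr p q => SOr (ren_sf m p) (ren_sf m q)
  | SNot p => SNot (ren_sf m p)
  end.

(* ODEs  x' = f(x) & Q  (ovars = x, orhs = f, odom = Q) *)

Record ode : Type := mkODE { ovars : list nat; orhs : list dterm; odom : sform }.

Definition wf_ode (ar : nat -> nat) (o : ode) : Prop :=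
  NoDup (ovars o) /\ length (orhs o) = length (ovars o) /\
  List.Forall dfree_term (orhs o) /\ List.Forall (wf_term ar) (orhs o) /\
  dfree_sf (odom o) /\ wf_sf ar (odom o).

Definition has_deriv_within (T : R) (g : R -> R) (z l : R) : Prop :=
  filterlim (fun s => (g s - g z) / (s - z))
    (within (fun s => 0 <= s <= T /\ s <> z) (locally z)) (locally l).

Definition ode_rel {ar} (I : dL_interp ar) (o : ode) (w nu : state) : Prop :=
  exists (T : R) (phi : R -> state),
    0 <= T /\
    (forall v, ~ (exists i, In i (ovars o) /\ v = Df i) -> phi 0 v = w v) /\
    phi T = nu /\
    forall z, 0 <= z <= T ->
      List.Forall2 (fun i t => phi z (Df i) = teval I (phi z) t) (ovars o) (orhs o) /\
      sf_sat I (phi z) (odom o) /\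
      (forall v, ~ (exists i, In i (ovars o) /\ (v = Pl i \/ v = Df i)) ->
                 phi z v = phi 0 v) /\
      (0 < T -> forall i, In i (ovars o) ->
         has_deriv_within T (fun s => phi s (Pl i)) z (phi z (Df i))).

Inductive fml : Type :=
| FCmp (c : cmp) (a b : dterm)
| FAnd (p q : fml)
| FOr (p q : fml)
| FNot (p : fml)
| FAll (v : var) (p : fml)
| FEx (v : var) (p : fml)
| FBox (o : ode) (p : fml)
| FDia (o : ode) (p : fml).

Fixpoint fsat {ar} (I : dL_interp ar) (w : state) (p : fml) : Prop :=
  match p with
  | FCmp c a b => cmp_sem c (teval I w a) (teval I w b)
  | FAnd p q => fsat I w p /\ fsat I w q
  | FOr p q => fsat I w p \/ fsat I w q
  | FNot p => ~ fsat I w p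
  | FAll v p => forall r, fsat I (supd w v r) p
  | FEx v p => exists r, fsat I (supd w v r) p
  | FBox o p => forall nu, ode_rel I o w nu -> fsat I nu p
  | FDia o p => exists nu, ode_rel I o w nu /\ fsat I nu p
  end.

Fixpoint wf_fml (ar : nat -> nat) (p : fml) : Prop :=
  match p with
  | FCmp _ a b => wf_term ar a /\ wf_term ar b
  | FAnd p q | FOr p q => wf_fml ar p /\ wf_fml ar q
  | FNot p | FAll _ p | FEx _ p => wf_fml ar p
  | FBox o p | FDia o p => wf_ode ar o /\ wf_fml ar p
  end.

Definition valid {ar} (I : dL_interp ar) (p : fml) : Prop := forall w, fsat I w p.

Definition FImp (p q : fml) : fml := FOr (FNot p) q.
Definition FIff (p q : fml) : fml := FAnd (FImp p q) (FImp q p).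
Definition FTrue : fml := FCmp CEq (TConst 0%Q) (TConst 0%Q).

(* x = y  (componentwise conjunction; x <> y is its negation) *)
Fixpoint vec_eq (xs ys : list nat) : fml :=
  match xs, ys with
  | x :: xs', y :: ys' => FAnd (FCmp CEq (TVar (Pl x)) (TVar (Pl y))) (vec_eq xs' ys')
  | _, _ => FTrue
  end.

Definition TNeg (t : dterm) : dterm := TTimes (TConst (-1)%Q) t.

(* Main.v *)
Require Import Defs.
From Stdlib Require Import Reals QArith List.
From Stdlib Require Import Lra Lia Classical FunctionalExtensionality Qreals.
From Coquelicot Require Import Coquelicot.
From Stdlib Require Import List.
Import List.ListNotations.
Open Scope R_scope.


Lemma ballR (x e y : R) : ball x e y <-> Rabs (y - x) < e.
Proof. unfold ball; simpl; unfold AbsRing_ball, abs, minus, plus, opp; simpl. tauto. Qed.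

Lemma locallyR (x : R) (P : R -> Prop) :
  locally x P <-> exists d, 0 < d /\ forall y, Rabs (y - x) < d -> P y.
Proof.
  split.
  - intros [e He]. exists e. split; [apply cond_pos|]. intros y Hy. apply He, ballR, Hy.
  - intros [d [Hd H]]. exists (mkposreal d Hd). intros y Hy. apply H, ballR, Hy.
Qed.

Lemma cont_eps (f : R -> R) x :
  continuous f x <-> forall eps, 0 < eps -> exists d, 0 < d /\
     forall y, Rabs (y - x) < d -> Rabs (f y - f x) < eps.
Proof.
  unfold continuous. rewrite filterlim_locally. split.
  - intros H eps He. specialize (H (mkposreal eps He)).
    apply locallyR in H. destruct H as [d [Hd Hd']].
    exists d; split; [exact Hd|]. intros y Hy. apply ballR. apply Hd'. exact Hy.
  - intros H eps. destruct (H eps (cond_pos eps)) as [d [Hd Hd']].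
    exists (mkposreal d Hd). intros y Hy. apply ballR. apply Hd'. apply ballR in Hy. exact Hy.
Qed.

Lemma hdw_iff T g z l :
  has_deriv_within T g z l <->
  forall eps, 0 < eps -> exists d, 0 < d /\ forall s, 0 <= s <= T -> s <> z ->
    Rabs (s - z) < d -> Rabs ((g s - g z) / (s - z) - l) < eps.
Proof.
  unfold has_deriv_within. rewrite filterlim_locally. split.
  - intros H eps He. specialize (H (mkposreal eps He)). unfold within in H.
    destruct (proj1 (locallyR _ _) H) as [d [Hd Hd']].
    exists d; split; [exact Hd|]. intros s Hs Hsz Hsd. apply ballR, Hd'; auto.
  - intros H eps. unfold within. apply (proj2 (locallyR _ _)). destruct (H eps (cond_pos eps)) as [d [Hd Hd']].
    exists d; split; [exact Hd|]. intros y Hy [Hy1 Hy2]. apply ballR, Hd'; auto.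
Qed.

Lemma is_derive_eps f x l :
  is_derive f x l <-> forall eps, 0 < eps -> exists d, 0 < d /\ forall h, h <> 0 ->
    Rabs h < d -> Rabs ((f (x + h) - f x) / h - l) < eps.
Proof.
  rewrite is_derive_Reals. unfold derivable_pt_lim. split.
  - intros H eps He. destruct (H eps He) as [d Hd]. exists d; split; [apply cond_pos|].
    intros h Hh Hhd. apply Hd; auto.
  - intros H eps He. destruct (H eps He) as [d [Hd Hd']]. exists (mkposreal d Hd).
    intros h Hh Hhd. apply Hd'; auto.
Qed.

Lemma is_derive_hdw T g z l : is_derive g z l -> has_deriv_within T g z l.
Proof.
  intros H. apply hdw_iff. intros eps He. destruct (proj1 (is_derive_eps _ _ _) H eps He) as [d [Hd Hd']].
  exists d; split; [exact Hd|]. intros s Hs Hsz Hsd.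
  specialize (Hd' (s - z)). replace (z + (s - z)) with s in Hd' by ring. apply Hd'; auto. lra.
Qed.

Lemma hdw_is_derive T g z l : 0 < z < T -> has_deriv_within T g z l -> is_derive g z l.
Proof.
  intros Hz H. apply is_derive_eps. intros eps He. destruct (proj1 (hdw_iff _ _ _ _) H eps He) as [d [Hd Hd']].
  exists (Rmin d (Rmin z (T - z))). split. { repeat apply Rmin_pos; lra. }
  intros h Hh Hhd. pose proof (Rmin_l d (Rmin z (T - z))). pose proof (Rmin_r d (Rmin z (T - z))).
  pose proof (Rmin_l z (T - z)). pose proof (Rmin_r z (T - z)).
  specialize (Hd' (z + h)). replace (z + h - z) with h in Hd' by ring. apply Hd'.
  - apply Rabs_def2 in Hhd. lra.
  - lra.
  - lra.
Qed.

Lemma hdw_ext T g1 g2 z l : (forall s, 0 <= s <= T -> g1 s = g2 s) -> 0 <= z <= T ->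
  has_deriv_within T g1 z l -> has_deriv_within T g2 z l.
Proof.
  intros E Hz H. rewrite hdw_iff in *. intros eps He. destruct (H eps He) as [d [Hd Hd']].
  exists d; split; [exact Hd|]. intros s Hs Hsz Hsd. rewrite <- !E; auto.
Qed.

Lemma hdw_restrict T1 T2 g z l : T1 <= T2 -> 0 <= z <= T1 ->
  has_deriv_within T2 g z l -> has_deriv_within T1 g z l.
Proof.
  intros HT Hz H. rewrite hdw_iff in *. intros eps He. destruct (H eps He) as [d [Hd Hd']].
  exists d; split; [exact Hd|]. intros s Hs Hsz Hsd. apply Hd'; auto; lra.
Qed.

Lemma hdw_rev T g z l : 0 <= z <= T -> has_deriv_within T g z l ->
  has_deriv_within T (fun s => g (T - s)) (T - z) (- l).
Proof.
  intros Hz H. rewrite hdw_iff in *. intros eps He. destruct (H eps He) as [d [Hd Hd']].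
  exists d; split; [exact Hd|]. intros s Hs Hsz Hsd.
  specialize (Hd' (T - s)). replace (T - (T - z)) with z by ring.
  replace ((g (T - s) - g z) / (s - (T - z)) - - l) with (- ((g (T - s) - g z) / (T - s - z) - l)).
  2:{ assert (s - (T - z) <> 0) by (intro; apply Hsz; lra).
        assert (T - s - z <> 0) by (intro; apply Hsz; lra). field; auto. }
  rewrite Rabs_Ropp. apply Hd'. lra. lra. rewrite <- Rabs_Ropp. replace (- (T - s - z)) with (s - (T - z)) by ring. auto.
Qed.

Definition wcont (a b : R) (g : R -> R) (z : R) : Prop :=
  forall eps, 0 < eps -> exists d, 0 < d /\ forall s, a <= s <= b -> Rabs (s - z) < d ->
    Rabs (g s - g z) < eps.

Lemma hdw_wcont T g z l : has_deriv_within T g z l -> wcont 0 T g z.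
Proof.
  intros H eps He. destruct (proj1 (hdw_iff _ _ _ _) H 1 Rlt_0_1) as [d [Hd Hd']].
  exists (Rmin d (eps / (Rabs l + 1 + 1))). split.
  { apply Rmin_pos; auto. apply Rdiv_lt_0_compat; auto. pose proof (Rabs_pos l); lra. }
  intros s Hs Hsd. destruct (Req_dec s z) as [->|Hsz].
  { replace (g z - g z) with 0 by ring. rewrite Rabs_R0; auto. }
  pose proof (Rmin_l d (eps / (Rabs l + 1 + 1))). pose proof (Rmin_r d (eps / (Rabs l + 1 + 1))).
  specialize (Hd' s Hs Hsz ltac:(lra)).
  assert (Hq : Rabs ((g s - g z) / (s - z)) <= Rabs l + 1).
  { pose proof (Rabs_triang_inv ((g s - g z) / (s - z)) l). lra. }
  replace (g s - g z) with ((g s - g z) / (s - z) * (s - z)) by (field; lra).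
  rewrite Rabs_mult.
  assert (Hpos : 0 < Rabs (s - z)) by (apply Rabs_pos_lt; lra).
  assert (Hp : 0 < Rabs l + 1 + 1) by (pose proof (Rabs_pos l); lra).
  assert (Hlt : Rabs (s - z) < eps / (Rabs l + 1 + 1)) by lra.
  apply Rmult_lt_compat_l with (r := Rabs l + 1 + 1) in Hlt; [|lra].
  replace ((Rabs l + 1 + 1) * (eps / (Rabs l + 1 + 1))) with eps in Hlt by (field; lra).
  pose proof (Rabs_pos ((g s - g z) / (s - z))). nra.
Qed.

Definition clampR (a b s : R) : R := Rmax a (Rmin b s).

Lemma clampR_in a b s : a <= b -> a <= clampR a b s <= b.
Proof. intros. unfold clampR. unfold Rmax, Rmin. repeat destruct Rle_dec; lra. Qed.
Lemma clampR_id a b s : a <= s <= b -> clampR a b s = s.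
Proof. intros. unfold clampR. unfold Rmax, Rmin. repeat destruct Rle_dec; lra. Qed.
Lemma clampR_lip a b s t : a <= b -> Rabs (clampR a b s - clampR a b t) <= Rabs (s - t).
Proof.
  intros. unfold clampR, Rmax, Rmin. repeat destruct Rle_dec;
  unfold Rabs; repeat destruct Rcase_abs; lra.
Qed.

Lemma MVT_within f df a b :
  a < b -> (forall x, a < x < b -> is_derive f x (df x)) ->
  (forall x, a <= x <= b -> wcont a b f x) ->
  exists c, a <= c <= b /\ f b - f a = df c * (b - a).
Proof.
  intros Hab Hder Hc.
  set (g := fun s => f (clampR a b s)).
  destruct (MVT_gen g a b df) as [c [Hc1 Hc2]].
  - rewrite Rmin_left, Rmax_right by lra. intros x Hx.
    apply is_derive_ext_loc with f; [|apply Hder; lra].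
    apply (proj2 (locallyR _ _)). exists (Rmin (x - a) (b - x)). split. { apply Rmin_pos; lra. }
    intros y Hy. pose proof (Rmin_l (x - a) (b - x)). pose proof (Rmin_r (x - a) (b - x)).
    apply Rabs_def2 in Hy. unfold g. rewrite clampR_id; auto. lra.
  - rewrite Rmin_left, Rmax_right by lra. intros x Hx.
    apply continuity_pt_filterlim. apply cont_eps. intros eps He.
    destruct (Hc x Hx eps He) as [d [Hd Hd']]. exists d; split; [exact Hd|].
    intros y Hy. unfold g. rewrite (clampR_id a b x) by lra. apply Hd'.
    apply clampR_in; lra. 
    pose proof (clampR_lip a b y x ltac:(lra)) as Hl. rewrite (clampR_id a b x) in Hl by lra. lra.
  - rewrite Rmin_left, Rmax_right in Hc1 by lra.
    unfold g in Hc2. rewrite !clampR_id in Hc2 by lra. exists c; split; auto.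
Qed.

Lemma is_derive_cont_pt (f : R -> R) (x l : R) : is_derive f x l -> continuity_pt f x.
Proof. intros H. apply derivable_continuous_pt. exists l. apply is_derive_Reals. exact H. Qed.

Lemma is_derive_continuous (f : R -> R) (x l : R) : is_derive f x l -> continuous f x.
Proof. intros H. apply continuity_pt_filterlim. eapply is_derive_cont_pt; eauto. Qed.


Definition dterm_ind2 (P : dterm -> Prop)
  (HV : forall v, P (TVar v)) (HC : forall q, P (TConst q))
  (HP : forall a b, P a -> P b -> P (TPlus a b))
  (HT : forall a b, P a -> P b -> P (TTimes a b))
  (HF : forall s args, Forall P args -> P (TFn s args)) :
  forall t, P t :=
  fix rec (t : dterm) : P t :=
  match t with
  | TVar v => HV v
  | TConst q => HC q
  | TPlus a b => HP a b (rec a) (rec b)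
  | TTimes a b => HT a b (rec a) (rec b)
  | TFn s args => HF s args
      ((fix go (l : list dterm) : Forall P l :=
         match l with nil => Forall_nil P | cons a l' => Forall_cons a (rec a) (go l') end) args)
  end.

Lemma dfree_fn s args : dfree_term (TFn s args) <-> Forall dfree_term args.
Proof.
  induction args as [|a l IH]; simpl. { split; auto. }
  rewrite Forall_cons_iff. rewrite <- IH. simpl. tauto.
Qed.

Lemma wf_fn ar s args : wf_term ar (TFn s args) <-> length args = ar s /\ Forall (wf_term ar) args.
Proof.
  simpl. assert (H : (fix go (l : list dterm) : Prop :=
         match l with nil => True | a :: l' => wf_term ar a /\ go l' end) args <-> Forall (wf_term ar) args).
  { induction args as [|a l IH]. { simpl; split; auto. } rewrite Forall_cons_iff, <- IH. simpl. tauto. }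
  rewrite H. tauto.
Qed.

Lemma occ_fn i s args : occurs_term i (TFn s args) <-> Exists (occurs_term i) args.
Proof.
  induction args as [|a l IH]; simpl. { split; [tauto| intro H; inversion H]. }
  rewrite Exists_cons. rewrite <- IH. simpl. tauto.
Qed.

Lemma teval_ren {ar} (I : dL_interp ar) (m : nat -> nat) (w1 w2 : state) t :
  dfree_term t -> (forall j, occurs_term j t -> w2 (Pl (m j)) = w1 (Pl j)) ->
  teval I w2 (ren_term m t) = teval I w1 t.
Proof.
  revert t. apply (dterm_ind2 (fun t => dfree_term t -> (forall j, occurs_term j t -> w2 (Pl (m j)) = w1 (Pl j)) ->
  teval I w2 (ren_term m t) = teval I w1 t)).
  - intros [j|j] Hd Ho; simpl in *. apply Ho; auto. contradiction.
  - reflexivity.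
  - intros a b IHa IHb [Ha Hb] Ho. simpl. rewrite IHa, IHb; auto; intros j Hj; apply Ho; simpl; auto.
  - intros a b IHa IHb [Ha Hb] Ho. simpl. rewrite IHa, IHb; auto; intros j Hj; apply Ho; simpl; auto.
  - intros s args IH Hd Ho. simpl. f_equal. apply functional_extensionality. intro k.
    rewrite map_map. f_equal. apply map_ext_in. intros a Ha.
    rewrite dfree_fn in Hd. rewrite Forall_forall in IH, Hd. apply IH; auto.
    intros j Hj. apply Ho. apply occ_fn. apply Exists_exists. eauto.
Qed.

Lemma ren_id t : ren_term (fun j => j) t = t.
Proof.
  induction t using dterm_ind2; simpl; try congruence.
  - destruct v; auto.
  - f_equal. induction args; simpl; auto. inversion H; subst. f_equal; auto.
Qed.

Lemma teval_agree {ar} (I : dL_interp ar) (w1 w2 : state) t :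
  dfree_term t -> (forall j, occurs_term j t -> w1 (Pl j) = w2 (Pl j)) ->
  teval I w1 t = teval I w2 t.
Proof.
  intros Hd Ho. rewrite <- (ren_id t) at 1. apply teval_ren; auto.
Qed.

Lemma sf_ren {ar} (I : dL_interp ar) (m : nat -> nat) (w1 w2 : state) p :
  dfree_sf p -> (forall j, occurs_sf j p -> w2 (Pl (m j)) = w1 (Pl j)) ->
  (sf_sat I w2 (ren_sf m p) <-> sf_sat I w1 p).
Proof.
  induction p; simpl; intros Hd Ho.
  - destruct Hd. rewrite !teval_ren with (w1 := w1); auto; try tauto;
    intros j Hj; apply Ho; auto.
  - destruct Hd. rewrite IHp1, IHp2; auto; try tauto; intros j Hj; apply Ho; auto.
  - destruct Hd. rewrite IHp1, IHp2; auto; try tauto; intros j Hj; apply Ho; auto.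
  - rewrite IHp; auto. tauto.
Qed.

Lemma ren_sf_id p : ren_sf (fun j => j) p = p.
Proof. induction p; simpl; rewrite ?ren_id; congruence. Qed.

Lemma sf_agree {ar} (I : dL_interp ar) (w1 w2 : state) p :
  dfree_sf p -> (forall j, occurs_sf j p -> w1 (Pl j) = w2 (Pl j)) ->
  (sf_sat I w1 p <-> sf_sat I w2 p).
Proof.
  intros Hd Ho. rewrite <- (ren_sf_id p) at 1. apply sf_ren; auto.
Qed.


Definition sumL (S : list nat) (g : nat -> R) : R := fold_right (fun j acc => g j + acc) 0 S.
Definition Nd (S : list nat) (u v : nat -> R) : R := sumL S (fun j => Rabs (u j - v j)).
Definition agree (S : list nat) (u0 u : nat -> R) : Prop := forall j, ~ In j S -> u j = u0 j.
Definition close (S : list nat) (d : R) (u0 u : nat -> R) : Prop :=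
  forall j, In j S -> Rabs (u j - u0 j) <= d.
Definition LipAt (S : list nat) (F : (nat -> R) -> R) (u0 : nat -> R) : Prop :=
  exists d, 0 < d /\ exists L, 0 <= L /\ forall u v, agree S u0 u -> agree S u0 v ->
    close S d u0 u -> close S d u0 v -> Rabs (F u - F v) <= L * Nd S u v.
Definition st (u : nat -> R) : state := fun v => match v with Pl j => u j | Df _ => 0 end.

Fixpoint sumn (k : nat) (g : nat -> R) : R :=
  match k with O => 0 | S k' => sumn k' g + g k' end.

Lemma sumL_ge0 S g : (forall j, In j S -> 0 <= g j) -> 0 <= sumL S g.
Proof. induction S; simpl; intros H. lra. pose proof (H a (or_introl eq_refl)). pose proof (IHS (fun j Hj => H j (or_intror Hj))). lra. Qed.

Lemma sumL_le S g h : (forall j, In j S -> g j <= h j) -> sumL S g <= sumL S h.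
Proof. induction S; simpl; intros H. lra. pose proof (H a (or_introl eq_refl)). pose proof (IHS (fun j Hj => H j (or_intror Hj))). lra. Qed.

Lemma sumL_plus S g h : sumL S (fun j => g j + h j) = sumL S g + sumL S h.
Proof. induction S; simpl. lra. rewrite IHS. lra. Qed.

Lemma sumL_scal S c g : sumL S (fun j => c * g j) = c * sumL S g.
Proof. induction S; simpl. lra. rewrite IHS. lra. Qed.

Lemma sumL_const S c : sumL S (fun _ => c) = INR (length S) * c.
Proof. induction S; simpl length; rewrite ?S_INR; simpl. lra. rewrite IHS. lra. Qed.

Lemma sumL_ext S g h : (forall j, In j S -> g j = h j) -> sumL S g = sumL S h.
Proof. intros H. apply Rle_antisym; apply sumL_le; intros j Hj; rewrite H; auto; lra. Qed.

Lemma sumL_term S g j : (forall j, In j S -> 0 <= g j) -> In j S -> g j <= sumL S g.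
Proof.
  induction S; simpl; intros H Hj. contradiction.
  destruct Hj as [<-|Hj].
  - pose proof (sumL_ge0 S g (fun j Hj => H j (or_intror Hj))). lra.
  - pose proof (H a (or_introl eq_refl)). pose proof (IHS (fun j Hj => H j (or_intror Hj)) Hj). lra.
Qed.

Lemma sumL_bound S g c : (forall j, In j S -> g j <= c) -> sumL S g <= INR (length S) * c.
Proof. intros H. rewrite <- sumL_const. apply sumL_le. auto. Qed.

Lemma Nd_ge0 S u v : 0 <= Nd S u v.
Proof. apply sumL_ge0. intros; apply Rabs_pos. Qed.

Lemma Nd_sym S u v : Nd S u v = Nd S v u.
Proof. apply sumL_ext. intros. rewrite Rabs_minus_sym. auto. Qed.

Lemma Nd_tri S u v w : Nd S u w <= Nd S u v + Nd S v w.
Proof.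
  unfold Nd. rewrite <- sumL_plus. apply sumL_le. intros j _.
  replace (u j - w j) with ((u j - v j) + (v j - w j)) by ring. apply Rabs_triang.
Qed.

Lemma Nd_term S u v j : In j S -> Rabs (u j - v j) <= Nd S u v.
Proof. intros Hj. apply (sumL_term S (fun j => Rabs (u j - v j))); auto. intros; apply Rabs_pos. Qed.

Lemma Nd_close S d u0 u : close S d u0 u -> Nd S u u0 <= INR (length S) * d.
Proof. intros H. apply sumL_bound. auto. Qed.

Lemma close_mono S d d' u0 u : d' <= d -> close S d' u0 u -> close S d u0 u.
Proof. intros Hd H j Hj. specialize (H j Hj). lra. Qed.

Lemma close_refl S d u0 : 0 <= d -> close S d u0 u0.
Proof. intros Hd j _. replace (u0 j - u0 j) with 0 by ring. rewrite Rabs_R0. auto. Qed.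

Lemma agree_refl S u0 : agree S u0 u0.
Proof. intros j _. auto. Qed.

Lemma list_delta (S : list nat) (Q : nat -> R -> Prop) :
  (forall j d d', Q j d -> 0 < d' <= d -> Q j d') ->
  (forall j, In j S -> exists d, 0 < d /\ Q j d) ->
  exists d, 0 < d /\ forall j, In j S -> Q j d.
Proof.
  intros Hm. induction S as [|a S IH]; intros H.
  - exists 1. split. lra. intros j [].
  - destruct (H a (or_introl eq_refl)) as [da [Hda Qa]].
    destruct IH as [dl [Hdl Ql]]. { intros j Hj. apply H. right; auto. }
    exists (Rmin da dl). split. apply Rmin_pos; auto.
    intros j [<-|Hj].
    + apply Hm with da; auto. split. apply Rmin_pos; auto. apply Rmin_l.
    + apply Hm with dl; auto. split. apply Rmin_pos; auto. apply Rmin_r.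
Qed.

Lemma nat_delta (k : nat) (Q : nat -> R -> Prop) :
  (forall j d d', Q j d -> 0 < d' <= d -> Q j d') ->
  (forall j, (j < k)%nat -> exists d, 0 < d /\ Q j d) ->
  exists d, 0 < d /\ forall j, (j < k)%nat -> Q j d.
Proof.
  intros Hm H. destruct (list_delta (seq 0 k) Q Hm) as [d [Hd Hq]].
  { intros j Hj. apply in_seq in Hj. apply H. lia. }
  exists d. split; auto. intros j Hj. apply Hq. apply in_seq. lia.
Qed.

Lemma sumn_ge0 k g : (forall i, (i < k)%nat -> 0 <= g i) -> 0 <= sumn k g.
Proof. induction k; simpl; intros H. lra. pose proof (H k ltac:(lia)). pose proof (IHk (fun i Hi => H i ltac:(lia))). lra. Qed.

Lemma sumn_term k g i : (forall i, (i < k)%nat -> 0 <= g i) -> (i < k)%nat -> g i <= sumn k g.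
Proof.
  induction k; simpl; intros H Hi. lia.
  pose proof (sumn_ge0 k g (fun i Hi => H i ltac:(lia))).
  destruct (Nat.eq_dec i k) as [->|Hne]. lra.
  pose proof (H k ltac:(lia)). pose proof (IHk (fun i Hi => H i ltac:(lia)) ltac:(lia)). lra.
Qed.

Lemma sumn_shift k g : sumn (S k) g = g O + sumn k (fun i => g (S i)).
Proof. induction k. simpl. lra. change (sumn (S (S k)) g) with (sumn (S k) g + g (S k)). rewrite IHk. simpl. lra. Qed.

Lemma sumn_le k g h : (forall i, (i < k)%nat -> g i <= h i) -> sumn k g <= sumn k h.
Proof. induction k; simpl; intros H. lra. pose proof (H k ltac:(lia)). pose proof (IHk (fun i Hi => H i ltac:(lia))). lra. Qed.

Lemma cupd_same v i a : cupd v i a i = a.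
Proof. unfold cupd. rewrite Nat.eqb_refl. auto. Qed.
Lemma cupd_cupd v i a b : cupd (cupd v i a) i b = cupd v i b.
Proof. apply functional_extensionality. intro j. unfold cupd. destruct (Nat.eqb j i); auto. Qed.
Lemma cupd_id v i : cupd v i (v i) = v.
Proof. apply functional_extensionality. intro j. unfold cupd. destruct (Nat.eqb_spec j i); subst; auto. Qed.

Lemma between_close a b c x d : Rmin a b <= c <= Rmax a b -> Rabs (a - x) <= d -> Rabs (b - x) <= d ->
  Rabs (c - x) <= d.
Proof. unfold Rmin, Rmax, Rabs. intros. repeat destruct Rle_dec; repeat destruct Rcase_abs; lra. Qed.

Lemma smoothLip k g : smooth k g -> forall v0, exists d, 0 < d /\ exists L, 0 <= L /\
  forall v1 v2, (forall i, (i < k)%nat -> Rabs (v1 i - v0 i) <= d) ->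
                (forall i, (i < k)%nat -> Rabs (v2 i - v0 i) <= d) ->
  Rabs (g v1 - g v2) <= L * sumn k (fun i => Rabs (v1 i - v2 i)).
Proof.
  intros [Hdep Hck] v0. destruct (Hck 1%nat) as [_ H1].
  destruct (nat_delta k (fun i del => forall w, (forall i', (i' < k)%nat -> Rabs (w i' - v0 i') < del) ->
       Rabs (pderiv i g w - pderiv i g v0) < 1)) as [del [Hdel Hq]].
  { intros j d d' Hq Hd' w Hw. apply Hq. intros i' Hi'. specialize (Hw i' Hi'). lra. }
  { intros j Hj. destruct (H1 j Hj) as [_ [Hc _]]. destruct (Hc v0 1 Rlt_0_1) as [d [Hd Hd']].
    exists d; split; [exact Hd|]. exact Hd'. }
  set (B := sumn k (fun i => Rabs (pderiv i g v0) + 1)).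
  assert (HB : forall i, (i < k)%nat -> Rabs (pderiv i g v0) + 1 <= B).
  { intros i Hi. apply (sumn_term k (fun i => Rabs (pderiv i g v0) + 1)); auto.
    intros; pose proof (Rabs_pos (pderiv i0 g v0)); lra. }
  assert (HB0 : 0 <= B). { apply sumn_ge0. intros; pose proof (Rabs_pos (pderiv i g v0)); lra. }
  exists (del / 2). split. lra. exists B. split. auto.
  intros v1 v2 Hv1 Hv2.
  set (z := fun m j => if Nat.ltb j m then v2 j else v1 j).
  assert (Hz : forall m, (m <= k)%nat -> Rabs (g (z m) - g v1) <= B * sumn m (fun i => Rabs (v1 i - v2 i))).
  { induction m as [|m IH]; intros Hm.
    - replace (z O) with v1. simpl. replace (g v1 - g v1) with 0 by ring. rewrite Rabs_R0. lra.
      apply functional_extensionality. intro j. unfold z. destruct (Nat.ltb_spec j 0); auto. lia.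
    - specialize (IH ltac:(lia)).
      assert (Ezs : z (S m) = cupd (z m) m (v2 m)).
      { apply functional_extensionality. intro j. unfold z, cupd.
        destruct (Nat.eqb_spec j m); destruct (Nat.ltb_spec j (S m)); destruct (Nat.ltb_spec j m); subst; auto; lia. }
      assert (Ez : cupd (z m) m (v1 m) = z m).
      { replace (v1 m) with (z m m). apply cupd_id. unfold z. destruct (Nat.ltb_spec m m); auto; lia. }
      set (phi := fun h => g (cupd (z m) m h)).
      destruct (H1 m ltac:(lia)) as [Hex _].
      assert (Hder : forall h, is_derive phi h (pderiv m g (cupd (z m) m h))).
      { intro h. specialize (Hex (cupd (z m) m h)). rewrite cupd_same in Hex.
        unfold pderiv. rewrite cupd_same.
        assert (Hphi : ex_derive phi h).
        { eapply ex_derive_ext; [|exact Hex]. intro t. unfold phi. simpl. rewrite cupd_cupd. reflexivity. }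
        rewrite (Derive_ext _ phi). apply Derive_correct. exact Hphi.
        intro t. unfold phi. rewrite cupd_cupd. reflexivity. }
      destruct (MVT_gen phi (v1 m) (v2 m) (fun h => pderiv m g (cupd (z m) m h))) as [c [Hc Heq]].
      { intros; apply Hder. }
      { intros x _. eapply is_derive_cont_pt. apply Hder. }
      assert (Hbd : Rabs (pderiv m g (cupd (z m) m c)) <= B).
      { assert (Hw : Rabs (pderiv m g (cupd (z m) m c) - pderiv m g v0) < 1).
        { apply Hq. lia. intros i' Hi'. unfold cupd. destruct (Nat.eqb_spec i' m).
          - subst. assert (Rabs (c - v0 m) <= del / 2). { apply between_close with (v1 m) (v2 m); auto. } lra.
          - unfold z. destruct (Nat.ltb i' m). specialize (Hv2 i' Hi'); lra. specialize (Hv1 i' Hi'); lra. }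
        pose proof (Rabs_triang_inv (pderiv m g (cupd (z m) m c)) (pderiv m g v0)). specialize (HB m ltac:(lia)). lra. }
      unfold phi in Heq. rewrite <- Ezs, Ez in Heq.
      simpl sumn.
      replace (g (z (S m)) - g v1) with ((g (z (S m)) - g (z m)) + (g (z m) - g v1)) by ring.
      eapply Rle_trans. apply Rabs_triang. rewrite Heq. rewrite Rabs_mult.
      rewrite (Rabs_minus_sym (v2 m)).
      pose proof (Rabs_pos (v1 m - v2 m)).
      assert (Rabs (pderiv m g (cupd (z m) m c)) * Rabs (v1 m - v2 m) <= B * Rabs (v1 m - v2 m)) by
        (apply Rmult_le_compat_r; auto).
      lra. }
  specialize (Hz k (le_n k)). replace (g v2) with (g (z k)). rewrite Rabs_minus_sym; exact Hz.
  apply Hdep. intros i Hi. unfold z. destruct (Nat.ltb_spec i k); auto. lia.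
Qed.


Definition vecA {ar} (I : dL_interp ar) (u : nat -> R) (args : list dterm) : nat -> R :=
  fun j => nth j (map (teval I (st u)) args) 0.

Lemma frac_le q eta : 0 <= q -> 0 < eta -> q * (eta / (q + 1)) <= eta.
Proof.
  intros Hq He. replace (q * (eta / (q + 1))) with (eta - eta / (q + 1)) by (field; lra).
  assert (0 < eta / (q + 1)) by (apply Rdiv_lt_0_compat; lra). lra.
Qed.

Lemma lip_small (S : list nat) La (Nduu0 d eta : R) : 0 <= La -> 0 < eta -> 0 <= Nduu0 ->
  Nduu0 <= INR (length S) * d -> d <= eta / (La * INR (length S) + 1) -> La * Nduu0 <= eta.
Proof.
  intros HL He HN H1 H2. pose proof (pos_INR (length S)) as Hn.
  apply Rle_trans with (La * (INR (length S) * (eta / (La * INR (length S) + 1)))).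
  - apply Rmult_le_compat_l; auto. eapply Rle_trans; [exact H1|]. apply Rmult_le_compat_l; auto.
  - rewrite <- Rmult_assoc. apply frac_le; auto. nra.
Qed.

Lemma args_lip {ar} (I : dL_interp ar) S u0 args :
  List.Forall (fun t => LipAt S (fun u => teval I (st u) t) u0) args ->
  forall eta, 0 < eta -> exists d, 0 < d /\ exists L, 0 <= L /\
  forall u v, agree S u0 u -> agree S u0 v -> close S d u0 u -> close S d u0 v ->
   (forall i, (i < length args)%nat -> Rabs (vecA I u args i - vecA I u0 args i) <= eta) /\
   sumn (length args) (fun i => Rabs (vecA I u args i - vecA I v args i)) <= L * Nd S u v.
Proof.
  induction args as [|a l IH]; intros HF eta Heta.
  - exists 1. split. lra. exists 0. split. lra. intros u v _ _ _ _. split.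
    + intros i Hi; simpl in Hi; lia.
    + simpl. pose proof (Nd_ge0 S u v). lra.
  - inversion HF as [|? ? Ha Hl]; subst. destruct Ha as [da [Hda [La [HLa Ha]]]].
    destruct (IH Hl eta Heta) as [dl [Hdl [Ll [HLl Hll]]]].
    pose proof (pos_INR (length S)) as Hn.
    set (d3 := eta / (La * INR (length S) + 1)).
    assert (Hd3 : 0 < d3) by (apply Rdiv_lt_0_compat; nra).
    set (d := Rmin (Rmin da dl) d3).
    assert (Hm1 : d <= da) by (eapply Rle_trans; [apply Rmin_l| apply Rmin_l]).
    assert (Hm2 : d <= dl) by (eapply Rle_trans; [apply Rmin_l| apply Rmin_r]).
    assert (Hm3 : d <= d3) by apply Rmin_r.
    assert (Hd : 0 < d) by (repeat apply Rmin_pos; auto).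
    exists d. split; [exact Hd|]. exists (La + Ll). split. lra.
    intros u v Hu Hv Cu Cv.
    destruct (Hll u v Hu Hv (close_mono _ _ _ _ _ Hm2 Cu) (close_mono _ _ _ _ _ Hm2 Cv)) as [Hl1 Hl2].
    split.
    + intros [|i] Hi.
      * change (Rabs (teval I (st u) a - teval I (st u0) a) <= eta).
        eapply Rle_trans. apply (Ha u u0 Hu (agree_refl S u0) (close_mono _ _ _ _ _ Hm1 Cu) (close_refl S da u0 ltac:(lra))).
        apply (lip_small S La _ d); auto. apply Nd_ge0. apply Nd_close; auto.
      * change (Rabs (vecA I u l i - vecA I u0 l i) <= eta). apply Hl1. simpl in Hi; lia.
    + simpl length. rewrite sumn_shift.
      change (Rabs (teval I (st u) a - teval I (st v) a) +
        sumn (length l) (fun i => Rabs (vecA I u l i - vecA I v l i)) <= (La + Ll) * Nd S u v).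
      pose proof (Ha u v Hu Hv (close_mono _ _ _ _ _ Hm1 Cu) (close_mono _ _ _ _ _ Hm1 Cv)). lra.
Qed.

Lemma term_lip {ar} (I : dL_interp ar) S :
  forall t, dfree_term t -> wf_term ar t -> forall u0, LipAt S (fun u => teval I (st u) t) u0.
Proof.
  apply (dterm_ind2 (fun t => dfree_term t -> wf_term ar t -> forall u0, LipAt S (fun u => teval I (st u) t) u0)).
  - intros [j|j] Hd Hw u0; simpl in Hd; [|contradiction].
    exists 1. split. lra. exists 1. split. lra. intros u v Hu Hv _ _. simpl.
    destruct (in_dec Nat.eq_dec j S) as [Hj|Hj].
    + rewrite Rmult_1_l. apply Nd_term; auto.
    + rewrite (Hu j Hj), (Hv j Hj). replace (u0 j - u0 j) with 0 by ring. rewrite Rabs_R0.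
      pose proof (Nd_ge0 S u v). lra.
  - intros q _ _ u0. exists 1. split. lra. exists 0. split. lra. intros u v _ _ _ _. simpl.
    replace (Q2R q - Q2R q) with 0 by ring. rewrite Rabs_R0. lra.
  - intros a b IHa IHb [Hda Hdb] [Hwa Hwb] u0.
    destruct (IHa Hda Hwa u0) as [da [Hda' [La [HLa Ha]]]].
    destruct (IHb Hdb Hwb u0) as [db [Hdb' [Lb [HLb Hb]]]].
    exists (Rmin da db). split. apply Rmin_pos; auto. exists (La + Lb). split. lra.
    intros u v Hu Hv Cu Cv. simpl.
    pose proof (Ha u v Hu Hv (close_mono _ _ _ _ _ (Rmin_l _ _) Cu) (close_mono _ _ _ _ _ (Rmin_l _ _) Cv)).
    pose proof (Hb u v Hu Hv (close_mono _ _ _ _ _ (Rmin_r _ _) Cu) (close_mono _ _ _ _ _ (Rmin_r _ _) Cv)).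
    replace (teval I (st u) a + teval I (st u) b - (teval I (st v) a + teval I (st v) b)) with
      ((teval I (st u) a - teval I (st v) a) + (teval I (st u) b - teval I (st v) b)) by ring.
    eapply Rle_trans. apply Rabs_triang. lra.
  - intros a b IHa IHb [Hda Hdb] [Hwa Hwb] u0.
    destruct (IHa Hda Hwa u0) as [da [Hda' [La [HLa Ha]]]].
    destruct (IHb Hdb Hwb u0) as [db [Hdb' [Lb [HLb Hb]]]].
    pose proof (pos_INR (length S)) as Hn.
    set (A := Rabs (teval I (st u0) a) + La * (INR (length S) * da)).
    set (B := Rabs (teval I (st u0) b) + Lb * (INR (length S) * db)).
    assert (HA0 : 0 <= A). { unfold A. pose proof (Rabs_pos (teval I (st u0) a)). assert (0 <= La * (INR (length S) * da)) by (apply Rmult_le_pos; nra). lra. }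
    assert (HB0 : 0 <= B). { unfold B. pose proof (Rabs_pos (teval I (st u0) b)). assert (0 <= Lb * (INR (length S) * db)) by (apply Rmult_le_pos; nra). lra. }
    exists (Rmin da db). split. apply Rmin_pos; auto. exists (A * Lb + B * La). split. nra.
    intros u v Hu Hv Cu Cv. simpl.
    assert (Cua := close_mono _ _ _ _ _ (Rmin_l _ _) Cu). assert (Cva := close_mono _ _ _ _ _ (Rmin_l _ _) Cv).
    assert (Cub := close_mono _ _ _ _ _ (Rmin_r _ _) Cu). assert (Cvb := close_mono _ _ _ _ _ (Rmin_r _ _) Cv).
    pose proof (Ha u v Hu Hv Cua Cva) as H1. pose proof (Hb u v Hu Hv Cub Cvb) as H2.
    assert (Hau : Rabs (teval I (st u) a) <= A).
    { pose proof (Ha u u0 Hu (agree_refl S u0) Cua (close_refl S da u0 ltac:(lra))).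
      pose proof (Nd_close S da u0 u Cua). pose proof (Rabs_triang_inv (teval I (st u) a) (teval I (st u0) a)).
      assert (La * Nd S u u0 <= La * (INR (length S) * da)) by (apply Rmult_le_compat_l; auto). unfold A. lra. }
    assert (Hbv : Rabs (teval I (st v) b) <= B).
    { pose proof (Hb v u0 Hv (agree_refl S u0) Cvb (close_refl S db u0 ltac:(lra))).
      pose proof (Nd_close S db u0 v Cvb). pose proof (Rabs_triang_inv (teval I (st v) b) (teval I (st u0) b)).
      assert (Lb * Nd S v u0 <= Lb * (INR (length S) * db)) by (apply Rmult_le_compat_l; auto). unfold B. lra. }
    replace (teval I (st u) a * teval I (st u) b - teval I (st v) a * teval I (st v) b) with
      (teval I (st u) a * (teval I (st u) b - teval I (st v) b) + teval I (st v) b * (teval I (st u) a - teval I (st v) a)) by ring.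
    eapply Rle_trans. apply Rabs_triang. rewrite !Rabs_mult.
    pose proof (Rabs_pos (teval I (st u) b - teval I (st v) b)).
    pose proof (Rabs_pos (teval I (st u) a - teval I (st v) a)).
    pose proof (Rabs_pos (teval I (st u) a)). pose proof (Rabs_pos (teval I (st v) b)).
    pose proof (Nd_ge0 S u v).
    assert (Rabs (teval I (st u) a) * Rabs (teval I (st u) b - teval I (st v) b) <= A * (Lb * Nd S u v)).
    { apply Rmult_le_compat; auto. }
    assert (Rabs (teval I (st v) b) * Rabs (teval I (st u) a - teval I (st v) a) <= B * (La * Nd S u v)).
    { apply Rmult_le_compat; auto. }
    nra.
  - intros s args IH Hd Hw u0.
    rewrite dfree_fn in Hd. rewrite wf_fn in Hw. destruct Hw as [Hlen Hwa].
    assert (HF : List.Forall (fun t => LipAt S (fun u => teval I (st u) t) u0) args).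
    { rewrite Forall_forall in *. intros t Ht. apply IH; auto. }
    destruct (smoothLip (ar s) (fn I s) (fn_smooth ar I s) (vecA I u0 args)) as [dg [Hdg [Lg [HLg Hg]]]].
    destruct (args_lip I S u0 args HF dg Hdg) as [d [Hd' [L [HL Ha]]]].
    exists d. split; [exact Hd'|]. exists (Lg * L). split. nra.
    intros u v Hu Hv Cu Cv.
    change (Rabs (fn I s (vecA I u args) - fn I s (vecA I v args)) <= Lg * L * Nd S u v).
    destruct (Ha u v Hu Hv Cu Cv) as [Hu1 Hs]. destruct (Ha v u Hv Hu Cv Cu) as [Hv1 _].
    eapply Rle_trans. apply Hg.
    + intros i Hi. apply Hu1. lia.
    + intros i Hi. apply Hv1. lia.
    + rewrite <- Hlen. rewrite Rmult_assoc. apply Rmult_le_compat_l; auto.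
Qed.


Lemma half_zero x C : 0 <= x -> (forall k, x <= C / 2 ^ k) -> x = 0.
Proof.
  intros Hx H. destruct (Req_dec x 0) as [|Hne]; auto. exfalso.
  assert (Hxp : 0 < x) by lra.
  destruct (Pow_x_infinity 2 ltac:(rewrite Rabs_right; lra) (C / x + 1)) as [N HN].
  specialize (HN N (le_n N)). specialize (H N).
  rewrite Rabs_right in HN by (apply Rle_ge, pow_le; lra).
  assert (Hp : 0 < 2 ^ N) by (apply pow_lt; lra).
  apply Rmult_le_compat_r with (r := 2 ^ N) in H; [|lra].
  replace (C / 2 ^ N * 2 ^ N) with C in H by (field; lra).
  assert (x * (C / x + 1) <= x * 2 ^ N) by (apply Rmult_le_compat_l; lra).
  replace (x * (C / x + 1)) with (C + x) in H0 by (field; lra). lra.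
Qed.

Lemma wcont_restrict T g z a b : wcont 0 T g z -> 0 <= a -> b <= T -> wcont a b g z.
Proof.
  intros H Ha Hb eps He. destruct (H eps He) as [d [Hd Hd']]. exists d. split; [exact Hd|].
  intros s Hs Hsd. apply Hd'; auto. lra.
Qed.

Lemma wcont_minus a b g1 g2 z : wcont a b g1 z -> wcont a b g2 z -> wcont a b (fun s => g1 s - g2 s) z.
Proof.
  intros H1 H2 eps He. destruct (H1 (eps/2) ltac:(lra)) as [d1 [Hd1 H1']].
  destruct (H2 (eps/2) ltac:(lra)) as [d2 [Hd2 H2']].
  exists (Rmin d1 d2). split. apply Rmin_pos; auto. intros s Hs Hsd.
  pose proof (Rmin_l d1 d2). pose proof (Rmin_r d1 d2).
  specialize (H1' s Hs ltac:(lra)). specialize (H2' s Hs ltac:(lra)).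
  replace (g1 s - g2 s - (g1 z - g2 z)) with ((g1 s - g1 z) - (g2 s - g2 z)) by ring.
  eapply Rle_lt_trans. apply Rabs_triang. rewrite Rabs_Ropp. lra.
Qed.

Definition VLip (S : list nat) (F : (nat -> R) -> nat -> R) (u0 : nat -> R) : Prop :=
  forall us, agree S u0 us -> exists d, 0 < d /\ exists L, 0 <= L /\
    forall u v, agree S u0 u -> agree S u0 v -> close S d us u -> close S d us v ->
    forall j, In j S -> Rabs (F u j - F v j) <= L * Nd S u v.

Lemma Nd_zero S u v : Nd S u v = 0 -> forall j, In j S -> u j = v j.
Proof.
  intros H j Hj. pose proof (Nd_term S u v j Hj). rewrite H in H0.
  pose proof (Rabs_pos (u j - v j)). assert (Rabs (u j - v j) = 0) by lra.
  apply Rabs_eq_0 in H2. lra.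
Qed.

Lemma ode_unique S F u0 T X1 X2 :
  VLip S F u0 ->
  (forall z, 0 <= z <= T -> agree S u0 (X1 z) /\ agree S u0 (X2 z)) ->
  (forall j, In j S -> X1 0 j = X2 0 j) ->
  (0 < T -> forall z, 0 <= z <= T -> forall j, In j S ->
      has_deriv_within T (fun s => X1 s j) z (F (X1 z) j) /\
      has_deriv_within T (fun s => X2 s j) z (F (X2 z) j)) ->
  forall z, 0 <= z <= T -> forall j, In j S -> X1 z j = X2 z j.
Proof.
  intros HL Hag H0 Hder.
  destruct (Rle_lt_dec T 0) as [HT|HT].
  { intros z Hz j Hj. replace z with 0 by lra. auto. }
  specialize (Hder HT).
  set (E := fun s => 0 <= s <= T /\ forall t, 0 <= t <= s -> forall j, In j S -> X1 t j = X2 t j).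
  destruct (completeness E) as [m [Hub Hlub]].
  { exists T. intros s [Hs _]. lra. }
  { exists 0. split. lra. intros t Ht. replace t with 0 by lra. auto. }
  assert (Hm0 : 0 <= m). { apply Hub. split. lra. intros t Ht. replace t with 0 by lra. auto. }
  assert (HmT : m <= T). { apply Hlub. intros s [Hs _]. lra. }
  assert (C1 : forall t, 0 <= t < m -> forall j, In j S -> X1 t j = X2 t j).
  { intros t Ht j Hj. apply NNPP. intro Hne.
    assert (m <= t). { apply Hlub. intros s [Hs Hs']. destruct (Rle_lt_dec s t); auto.
      exfalso. apply Hne. apply Hs'; auto. lra. }
    lra. }
  assert (C2 : forall j, In j S -> X1 m j = X2 m j).
  { intros j Hj. destruct (Req_dec m 0) as [->|Hmne]; auto.
    apply NNPP. intro Hne.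
    assert (Hpos : 0 < Rabs (X1 m j - X2 m j)) by (apply Rabs_pos_lt; lra).
    set (eps := Rabs (X1 m j - X2 m j) / 2).
    destruct (Hder m ltac:(lra) j Hj) as [D1 D2].
    destruct (hdw_wcont _ _ _ _ D1 eps ltac:(unfold eps; lra)) as [d1 [Hd1 W1]].
    destruct (hdw_wcont _ _ _ _ D2 eps ltac:(unfold eps; lra)) as [d2 [Hd2 W2]].
    set (t := Rmax 0 (m - Rmin d1 d2 / 2)).
    pose proof (Rmin_l d1 d2). pose proof (Rmin_r d1 d2). pose proof (Rmin_pos d1 d2 Hd1 Hd2).
    assert (Ht : 0 <= t < m /\ Rabs (t - m) < Rmin d1 d2).
    { unfold t, Rmax. destruct Rle_dec; split; try lra; rewrite Rabs_left1 by lra; lra. }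
    specialize (C1 t ltac:(lra) j Hj).
    specialize (W1 t ltac:(lra) ltac:(lra)). specialize (W2 t ltac:(lra) ltac:(lra)).
    rewrite C1 in W1.
    assert (Rabs (X1 m j - X2 m j) <= Rabs (X2 t j - X1 m j) + Rabs (X2 t j - X2 m j)).
    { replace (X1 m j - X2 m j) with (-(X2 t j - X1 m j) + (X2 t j - X2 m j)) by ring.
      eapply Rle_trans. apply Rabs_triang. rewrite Rabs_Ropp. lra. }
    unfold eps in *. lra. }
  assert (Em : E m).
  { split. lra. intros t Ht j Hj. destruct (Req_dec t m) as [->|]; auto. apply C1; auto. lra. }
  intros z Hz j Hj.
  destruct (Req_dec m T) as [HmT'|HmT'].
  { destruct Em as [_ Em]. apply Em; auto. lra. }
  exfalso.
  assert (Hag1 : agree S u0 (X1 m)) by (apply Hag; lra).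
  destruct (HL (X1 m) Hag1) as [d [Hd [L [HL0 HLip]]]].
  destruct (list_delta S (fun j eta => forall s, 0 <= s <= T -> Rabs (s - m) < eta ->
      Rabs (X1 s j - X1 m j) < d /\ Rabs (X2 s j - X2 m j) < d)) as [eta [Heta Heta']].
  { intros j' e e' Hq He' s Hs Hsm. apply Hq; auto. lra. }
  { intros j' Hj'. destruct (Hder m ltac:(lra) j' Hj') as [D1 D2].
    destruct (hdw_wcont _ _ _ _ D1 d Hd) as [d1 [Hd1 W1]].
    destruct (hdw_wcont _ _ _ _ D2 d Hd) as [d2 [Hd2 W2]].
    exists (Rmin d1 d2). split. apply Rmin_pos; auto. intros s Hs Hsm.
    pose proof (Rmin_l d1 d2). pose proof (Rmin_r d1 d2). split.
    apply W1; auto; lra. apply W2; auto; lra. }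
  pose proof (pos_INR (length S)) as Hn.
  set (n := INR (length S)) in *.
  set (e1 := Rmin (eta / 2) (Rmin (T - m) (1 / (2 * (n * L + 1))))).
  assert (He1a : e1 <= eta / 2) by apply Rmin_l.
  assert (He1b : e1 <= T - m) by (eapply Rle_trans; [apply Rmin_r| apply Rmin_l]).
  assert (He1c : e1 <= 1 / (2 * (n * L + 1))) by (eapply Rle_trans; [apply Rmin_r| apply Rmin_r]).
  assert (He1 : 0 < e1). { repeat apply Rmin_pos; try lra. apply Rdiv_lt_0_compat; nra. }
  assert (HnL : n * L * e1 <= 1 / 2).
  { assert (0 <= n * L) by nra.
    apply Rle_trans with (n * L * (1 / (2 * (n * L + 1)))). apply Rmult_le_compat_l; auto.
    apply Rmult_le_reg_r with (2 * (n * L + 1)). nra.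
    replace (n * L * (1 / (2 * (n * L + 1))) * (2 * (n * L + 1))) with (n * L) by (field; nra). nra. }
  set (b := m + e1).
  assert (Hclose : forall s, m <= s <= b -> close S d (X1 m) (X1 s) /\ close S d (X1 m) (X2 s)).
  { intros s Hs. split; intros j' Hj'; destruct (Heta' j' Hj' s ltac:(unfold b in *; lra) ltac:(rewrite Rabs_right; unfold b in *; lra)) as [A1 A2].
    lra. rewrite (C2 j' Hj'). lra. }
  assert (Hiter : forall k s, m <= s <= b -> Nd S (X1 s) (X2 s) <= (2 * n * d) / 2 ^ k).
  { induction k as [|k IH]; intros s Hs.
    - simpl. replace (2 * n * d / 1) with (n * d + n * d) by field.
      destruct (Hclose s Hs) as [Cs1 Cs2].
      eapply Rle_trans. apply (Nd_tri S (X1 s) (X1 m) (X2 s)).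
      pose proof (Nd_close S d _ _ Cs1). pose proof (Nd_close S d _ _ Cs2). rewrite (Nd_sym S (X1 m)). unfold n. lra.
    - assert (Hjj : forall j, In j S -> Rabs (X1 s j - X2 s j) <= L * (2 * n * d / 2 ^ k) * e1).
      { intros j' Hj'. destruct (Req_dec s m) as [->|Hsm].
        { rewrite (C2 j' Hj'). replace (X2 m j' - X2 m j') with 0 by ring. rewrite Rabs_R0.
          assert (0 <= 2 * n * d / 2 ^ k) by (apply Rdiv_le_0_compat; [nra| apply pow_lt; lra]). 
          apply Rmult_le_pos; [|lra]. apply Rmult_le_pos; auto. }
        destruct (MVT_within (fun t => X1 t j' - X2 t j') (fun t => F (X1 t) j' - F (X2 t) j') m s) as [c [Hc Heq]].
        + lra.
        + intros x Hx. destruct (Hder x ltac:(unfold b in *; lra) j' Hj') as [D1 D2].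
          apply hdw_is_derive in D1; [|unfold b in *; lra]. apply hdw_is_derive in D2; [|unfold b in *; lra].
          apply (is_derive_minus _ _ _ _ _ D1 D2).
        + intros x Hx. destruct (Hder x ltac:(unfold b in *; lra) j' Hj') as [D1 D2].
          apply wcont_minus; eapply wcont_restrict; try (eapply hdw_wcont; eauto); unfold b in *; lra.
        + rewrite (C2 j' Hj') in Heq. replace (X2 m j' - X2 m j') with 0 in Heq by ring.
          rewrite Rminus_0_r in Heq. rewrite Heq. rewrite Rabs_mult.
          destruct (Hclose c ltac:(lra)) as [Cc1 Cc2].
          assert (Hc1 : agree S u0 (X1 c) /\ agree S u0 (X2 c)) by (apply Hag; unfold b in *; lra).
          pose proof (HLip (X1 c) (X2 c) (proj1 Hc1) (proj2 Hc1) Cc1 Cc2 j' Hj') as Hl.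
          pose proof (IH c ltac:(lra)) as Hc'.
          rewrite (Rabs_right (s - m)) by lra.
          pose proof (Rabs_pos (F (X1 c) j' - F (X2 c) j')).
          apply Rmult_le_compat; try lra.
          eapply Rle_trans; [exact Hl|]. apply Rmult_le_compat_l; auto. unfold b in *; lra. }
      eapply Rle_trans. apply sumL_bound. exact Hjj.
      fold n. replace (2 ^ Datatypes.S k) with (2 * 2 ^ k) by (simpl; ring).
      assert (0 <= 2 * n * d / 2 ^ k) by (apply Rdiv_le_0_compat; [nra| apply pow_lt; lra]).
      replace (2 * n * d / (2 * 2 ^ k)) with ((1/2) * (2 * n * d / 2 ^ k)) by (field; apply pow_nonzero; lra).
      replace (n * (L * (2 * n * d / 2 ^ k) * e1)) with ((n * L * e1) * (2 * n * d / 2 ^ k)) by ring.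
      apply Rmult_le_compat_r; auto. }
  assert (Eb : E b).
  { split. unfold b; lra. intros t Ht j' Hj'. destruct (Rle_lt_dec t m).
    - destruct Em as [_ Em]. apply Em; auto. lra.
    - apply Nd_zero with S; auto. apply half_zero with (2 * n * d). apply Nd_ge0.
      intro k. apply Hiter. lra. }
  pose proof (Hub b Eb). unfold b in *. lra.
Qed.


Definition memb (j : nat) (Sl : list nat) : bool := existsb (Nat.eqb j) Sl.
Lemma memb_In j Sl : memb j Sl = true <-> In j Sl.
Proof.
  unfold memb. rewrite existsb_exists. split.
  - intros [x [Hx Hj]]. apply Nat.eqb_eq in Hj. subst; auto.
  - intros H. exists j. split; auto. apply Nat.eqb_refl.
Qed.
Lemma memb_false j Sl : ~ In j Sl -> memb j Sl = false.
Proof. intros H. destruct (memb j Sl) eqn:E; auto. apply memb_In in E. contradiction. Qed.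

Lemma RInt_minusR (f g : R -> R) a b : ex_RInt f a b -> ex_RInt g a b ->
  @eq R (RInt (fun x => f x - g x) a b) (RInt f a b - RInt g a b).
Proof. intros H H0. exact (RInt_minus f g a b H H0). Qed.
Lemma RInt_constR a b c : @eq R (RInt (fun _ => c) a b) ((b - a) * c).
Proof. rewrite RInt_const. reflexivity. Qed.
Lemma RInt_pointR a (f : R -> R) : @eq R (RInt f a a) 0.
Proof. rewrite RInt_point. reflexivity. Qed.

Lemma RInt_const0 (c h : R) : @eq R (RInt (fun _ => c) 0 h) (h * c).
Proof. rewrite RInt_constR. ring. Qed.

Definition contR (g : R -> R) := forall x, continuous g x.

Lemma exRInt_c g a b : contR g -> ex_RInt g a b.
Proof. intros H. apply (ex_RInt_continuous (V := R_CompleteNormedModule)). intros; apply H. Qed.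

Lemma FTC g z : contR g -> is_derive (fun x => RInt g 0 x) z (g z).
Proof.
  intros H. apply (is_derive_RInt (V := R_CompleteNormedModule) g (fun x => RInt g 0 x) 0 z).
  exists (mkposreal 1 Rlt_0_1). intros y _.
  apply (RInt_correct (V := R_CompleteNormedModule)). apply exRInt_c; auto. apply H.
Qed.

Lemma RInt_bound g b M : contR g -> 0 <= b -> (forall s, 0 <= s <= b -> Rabs (g s) <= M) ->
  Rabs (RInt g 0 b) <= b * M.
Proof.
  intros Hc Hb HM. replace (b * M) with ((b - 0) * M) by ring. apply abs_RInt_le_const; auto.
  apply exRInt_c; auto.
Qed.

Lemma Nd_cont Sl (Y : R -> nat -> R) t : (forall j, In j Sl -> continuous (fun s => Y s j) t) ->
  forall eps, 0 < eps -> exists d, 0 < d /\ forall s, Rabs (s - t) < d -> Nd Sl (Y s) (Y t) < eps.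
Proof.
  intros H eps He. pose proof (pos_INR (length Sl)) as Hn.
  set (e := eps / (INR (length Sl) + 1)).
  assert (He' : 0 < e) by (apply Rdiv_lt_0_compat; lra).
  destruct (list_delta Sl (fun j d => forall s, Rabs (s - t) < d -> Rabs (Y s j - Y t j) < e)) as [d [Hd Hq]].
  { intros j d d' Hq Hd' s Hs. apply Hq. lra. }
  { intros j Hj. destruct (proj1 (cont_eps _ _) (H j Hj) e He') as [d [Hd Hd']]. exists d; split; [exact Hd|]. exact Hd'. }
  exists d. split; [exact Hd|]. intros s Hs.
  apply Rle_lt_trans with (INR (length Sl) * e).
  - apply sumL_bound. intros j Hj. left. apply Hq; auto.
  - unfold e. replace (INR (length Sl) * (eps / (INR (length Sl) + 1))) with (eps - eps / (INR (length Sl) + 1)) by (field; lra).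
    assert (0 < eps / (INR (length Sl) + 1)) by (apply Rdiv_lt_0_compat; lra). lra.
Qed.

Lemma contG Sl (G : (nat -> R) -> nat -> R) L (Y : R -> nat -> R) j :
  0 <= L -> (forall u v, Rabs (G u j - G v j) <= L * Nd Sl u v) ->
  (forall j t, In j Sl -> continuous (fun s => Y s j) t) -> contR (fun s => G (Y s) j).
Proof.
  intros HL HG HY t. apply cont_eps. intros eps He.
  destruct (Nd_cont Sl Y t (fun j Hj => HY j t Hj) (eps / (L + 1))) as [d [Hd Hd']].
  { apply Rdiv_lt_0_compat; lra. }
  exists d. split; [exact Hd|]. intros y Hy. eapply Rle_lt_trans. apply HG.
  specialize (Hd' y Hy). pose proof (Nd_ge0 Sl (Y y) (Y t)).
  apply Rle_lt_trans with ((L + 1) * Nd Sl (Y y) (Y t)). nra.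
  apply Rmult_lt_compat_l with (r := L + 1) in Hd'; [|lra].
  replace ((L + 1) * (eps / (L + 1))) with eps in Hd' by (field; lra). lra.
Qed.

Fixpoint picard (Sl : list nat) (G : (nat -> R) -> nat -> R) (u0 : nat -> R) (h : R) (k : nat) : R -> nat -> R :=
  match k with
  | O => fun _ => u0
  | Datatypes.S k' => fun t j => if memb j Sl then u0 j + RInt (fun s => G (picard Sl G u0 h k' s) j) 0 (clampR 0 h t) else u0 j
  end.

Lemma clamp_cont h t : 0 <= h -> continuous (clampR 0 h) t.
Proof.
  intros Hh. apply cont_eps. intros eps He. exists eps. split; [exact He|]. intros y Hy.
  eapply Rle_lt_trans. apply clampR_lip; auto. auto.
Qed.

Lemma picard_cont Sl G u0 h L k : 0 <= L -> 0 <= h ->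
  (forall u v j, In j Sl -> Rabs (G u j - G v j) <= L * Nd Sl u v) ->
  forall j t, continuous (fun s => picard Sl G u0 h k s j) t.
Proof.
  intros HL Hh HG. induction k as [|k IH]; intros j t; simpl.
  - apply continuous_const.
  - destruct (memb j Sl) eqn:E; [|apply continuous_const].
    assert (Hc : contR (fun s => G (picard Sl G u0 h k s) j)).
    { apply (contG Sl G L (picard Sl G u0 h k) j HL). intros u v; apply HG; apply memb_In; auto.
      intros j' t' _; apply IH. }
    apply (continuous_plus (fun _ => u0 j) (fun s => RInt (fun s0 => G (picard Sl G u0 h k s0) j) 0 (clampR 0 h s))).
    apply continuous_const.
    apply (continuous_comp (clampR 0 h) (fun x => RInt (fun s0 => G (picard Sl G u0 h k s0) j) 0 x)).
    apply clamp_cont; auto.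
    eapply is_derive_continuous. apply FTC. exact Hc.
Qed.

Lemma Rpm1 (a b : R) : a + b - a = b. Proof. ring. Qed.
Lemma Rpm2 (a x y : R) : a + x - (a + y) = x - y. Proof. ring. Qed.

Lemma picard_off Sl G u0 h k t j : ~ In j Sl -> picard Sl G u0 h k t j = u0 j.
Proof. intros H. destruct k; simpl; auto. rewrite memb_false; auto. Qed.

Lemma picard_step Sl G u0 h L M :
  (forall u v j, In j Sl -> Rabs (G u j - G v j) <= L * Nd Sl u v) ->
  (forall u j, In j Sl -> Rabs (G u j) <= M) ->
  0 <= M -> 0 <= L -> 0 < h -> INR (length Sl) * L * h <= 1/2 ->
  forall k t j, Rabs (picard Sl G u0 h (Datatypes.S k) t j - picard Sl G u0 h k t j) <= M * h / 2 ^ k.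
Proof.
  intros HG HM HM0 HL Hh HnLh. pose proof (pos_INR (length Sl)) as Hn.
  assert (Hp : forall k, 0 < 2 ^ k) by (intro; apply pow_lt; lra).
  induction k as [|k IH]; intros t j.
  - destruct (in_dec Nat.eq_dec j Sl) as [Hj|Hj].
    2:{ rewrite !picard_off; auto. replace (u0 j - u0 j) with 0 by ring. rewrite Rabs_R0.
        apply Rdiv_le_0_compat. nra. apply Hp. }
    simpl. rewrite (proj2 (memb_In j Sl) Hj). rewrite Rpm1.
    rewrite Rdiv_1_r. pose proof (clampR_in 0 h t ltac:(lra)).
    eapply Rle_trans. apply RInt_bound. intro; apply continuous_const. lra. intros; apply HM; auto.
    rewrite Rmult_comm. apply Rmult_le_compat_l; lra.
  - destruct (in_dec Nat.eq_dec j Sl) as [Hj|Hj].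
    2:{ rewrite !picard_off; auto. replace (u0 j - u0 j) with 0 by ring. rewrite Rabs_R0.
        apply Rdiv_le_0_compat. nra. apply Hp. }
    change (picard Sl G u0 h (Datatypes.S (Datatypes.S k)) t j) with
      (if memb j Sl then u0 j + RInt (fun s => G (picard Sl G u0 h (Datatypes.S k) s) j) 0 (clampR 0 h t) else u0 j).
    change (picard Sl G u0 h (Datatypes.S k) t j) with
      (if memb j Sl then u0 j + RInt (fun s => G (picard Sl G u0 h k s) j) 0 (clampR 0 h t) else u0 j).
    rewrite (proj2 (memb_In j Sl) Hj).
    assert (C1 : contR (fun s => G (picard Sl G u0 h (Datatypes.S k) s) j)).
    { apply (contG Sl G L _ j HL). intros; apply HG; auto. intros; apply (picard_cont Sl G u0 h L); auto; lra. }
    assert (C0 : contR (fun s => G (picard Sl G u0 h k s) j)).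
    { apply (contG Sl G L _ j HL). intros; apply HG; auto. intros; apply (picard_cont Sl G u0 h L); auto; lra. }
    rewrite Rpm2. rewrite <- RInt_minusR by (apply exRInt_c; auto).
    pose proof (clampR_in 0 h t ltac:(lra)) as Hc.
    eapply Rle_trans. apply RInt_bound with (M := L * (INR (length Sl) * (M * h / 2 ^ k))).
    + intro x. apply (continuous_minus (fun s => G (picard Sl G u0 h (Datatypes.S k) s) j) (fun s => G (picard Sl G u0 h k s) j)); auto.
    + lra.
    + intros s _. eapply Rle_trans. apply HG; auto. apply Rmult_le_compat_l; auto.
      apply sumL_bound. intros j' _. apply IH.
    + assert (0 <= M * h / 2 ^ k) by (apply Rdiv_le_0_compat; [nra|apply Hp]).
      apply Rle_trans with (h * (L * (INR (length Sl) * (M * h / 2 ^ k)))).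
      { apply Rmult_le_compat_r; [|lra]. apply Rmult_le_pos; auto. apply Rmult_le_pos; auto. }
      replace (h * (L * (INR (length Sl) * (M * h / 2 ^ k)))) with ((INR (length Sl) * L * h) * (M * h / 2 ^ k)) by ring.
      replace (M * h / 2 ^ Datatypes.S k) with (1/2 * (M * h / 2 ^ k)) by (simpl; field; apply Rgt_not_eq, Hp).
      apply Rmult_le_compat_r; auto.
Qed.

Lemma picard_tele Sl G u0 h L M :
  (forall u v j, In j Sl -> Rabs (G u j - G v j) <= L * Nd Sl u v) ->
  (forall u j, In j Sl -> Rabs (G u j) <= M) ->
  0 <= M -> 0 <= L -> 0 < h -> INR (length Sl) * L * h <= 1/2 ->
  forall k i t j, Rabs (picard Sl G u0 h (k + i) t j - picard Sl G u0 h k t j) <= 2 * M * h / 2 ^ k - 2 * M * h / 2 ^ (k + i).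
Proof.
  intros HG HM HM0 HL Hh HnLh k i t j.
  assert (Hp : forall k, 0 < 2 ^ k) by (intro; apply pow_lt; lra).
  induction i as [|i IH].
  - rewrite Nat.add_0_r. replace (picard Sl G u0 h k t j - picard Sl G u0 h k t j) with 0 by ring.
    rewrite Rabs_R0. lra.
  - replace (k + Datatypes.S i)%nat with (Datatypes.S (k + i)) by lia.
    pose proof (picard_step Sl G u0 h L M HG HM HM0 HL Hh HnLh (k + i) t j) as Hs.
    replace (picard Sl G u0 h (Datatypes.S (k + i)) t j - picard Sl G u0 h k t j) with
      ((picard Sl G u0 h (Datatypes.S (k + i)) t j - picard Sl G u0 h (k + i) t j) + (picard Sl G u0 h (k + i) t j - picard Sl G u0 h k t j)) by ring.
    eapply Rle_trans. apply Rabs_triang.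
    replace (2 ^ Datatypes.S (k + i)) with (2 * 2 ^ (k + i)) by (simpl; ring).
    replace (2 * M * h / (2 * 2 ^ (k + i))) with (M * h / 2 ^ (k + i)) by (field; apply Rgt_not_eq, Hp).
    replace (2 * M * h / 2 ^ (k + i)) with (2 * (M * h / 2 ^ (k + i))) in IH by (field; apply Rgt_not_eq, Hp).
    lra.
Qed.

Lemma pow2_big C eps : 0 < eps -> exists N, C / 2 ^ N < eps.
Proof.
  intros He. destruct (Pow_x_infinity 2 ltac:(rewrite Rabs_right; lra) (Rabs C / eps + 1)) as [N HN].
  exists N. specialize (HN N (le_n N)). rewrite Rabs_right in HN by (apply Rle_ge, pow_le; lra).
  assert (Hp : 0 < 2 ^ N) by (apply pow_lt; lra).
  apply Rmult_lt_reg_r with (2 ^ N); auto. replace (C / 2 ^ N * 2 ^ N) with C by (field; lra).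
  assert (eps * (Rabs C / eps + 1) <= eps * 2 ^ N) by (apply Rmult_le_compat_l; lra).
  replace (eps * (Rabs C / eps + 1)) with (Rabs C + eps) in H by (field; lra).
  pose proof (Rle_abs C). lra.
Qed.

Lemma geo_lim (a : nat -> R) (C : R) : 0 <= C -> (forall k i, Rabs (a (k + i)%nat - a k) <= C / 2 ^ k) ->
  {l : R | forall k, Rabs (l - a k) <= C / 2 ^ k}.
Proof.
  intros HC Hb.
  assert (Hp : forall k, 0 < 2 ^ k) by (intro; apply pow_lt; lra).
  assert (Hcau : Cauchy_crit a).
  { intros eps He. destruct (pow2_big C (eps / 2) ltac:(lra)) as [N HN]. exists N.
    intros n m Hn Hm. unfold R_dist.
    pose proof (Hb N (n - N)%nat) as H1. pose proof (Hb N (m - N)%nat) as H2.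
    replace (N + (n - N))%nat with n in H1 by lia. replace (N + (m - N))%nat with m in H2 by lia.
    replace (a n - a m) with ((a n - a N) - (a m - a N)) by ring.
    eapply Rle_lt_trans. apply Rabs_triang. rewrite Rabs_Ropp. lra. }
  destruct (Rcomplete.R_complete a Hcau) as [l Hl]. exists l. intro k.
  apply Rle_plus_epsilon. intros eps He. destruct (Hl eps He) as [N HN].
  specialize (HN (N + k)%nat ltac:(lia)). unfold R_dist in HN.
  pose proof (Hb k N) as H1. replace (k + N)%nat with (N + k)%nat in H1 by lia.
  replace (l - a k) with (-(a (N + k)%nat - l) + (a (N + k)%nat - a k)) by ring.
  eapply Rle_trans. apply Rabs_triang. rewrite Rabs_Ropp. lra.
Qed.

Lemma picard_zero Sl G u0 h k j : 0 <= h -> picard Sl G u0 h k 0 j = u0 j.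
Proof.
  intros Hh. destruct k; simpl; auto. destruct (memb j Sl); auto.
  rewrite clampR_id by lra. rewrite RInt_pointR. ring.
Qed.

Lemma picard_limit Sl G u0 h L M :
  (forall u v j, In j Sl -> Rabs (G u j - G v j) <= L * Nd Sl u v) ->
  (forall u j, In j Sl -> Rabs (G u j) <= M) ->
  0 <= M -> 0 <= L -> 0 < h -> INR (length Sl) * L * h <= 1/2 ->
  exists Y : R -> nat -> R,
    (forall t j, ~ In j Sl -> Y t j = u0 j) /\
    (forall j, Y 0 j = u0 j) /\
    (forall j t, continuous (fun s => Y s j) t) /\
    (forall t j, In j Sl -> Y t j = u0 j + RInt (fun s => G (Y s) j) 0 (clampR 0 h t)).
Proof.
  intros HG HM HM0 HL Hh HnLh.
  assert (Hp : forall k, 0 < 2 ^ k) by (intro; apply pow_lt; lra).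
  pose proof (pos_INR (length Sl)) as Hn.
  assert (HC : 0 <= 2 * M * h) by nra.
  assert (Hb : forall t j k i, Rabs (picard Sl G u0 h (k + i) t j - picard Sl G u0 h k t j) <= 2 * M * h / 2 ^ k).
  { intros t j k i. eapply Rle_trans. apply (picard_tele Sl G u0 h L M); auto.
    assert (0 <= 2 * M * h / 2 ^ (k + i)) by (apply Rdiv_le_0_compat; auto). lra. }
  set (Y := fun t j => proj1_sig (geo_lim (fun k => picard Sl G u0 h k t j) (2 * M * h) HC (Hb t j))).
  assert (HY : forall t j k, Rabs (Y t j - picard Sl G u0 h k t j) <= 2 * M * h / 2 ^ k).
  { intros t j k. unfold Y. destruct (geo_lim _ _ HC (Hb t j)) as [l Hl]. simpl. apply Hl. }
  assert (Hconst : forall t j c, (forall k, picard Sl G u0 h k t j = c) -> Y t j = c).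
  { intros t j c Hc. apply Rminus_diag_uniq. apply Rabs_eq_0. apply half_zero with (2 * M * h). apply Rabs_pos.
    intro k. rewrite <- (Hc k). apply HY. }
  assert (Hcont : forall j t, continuous (fun s => Y s j) t).
  { intros j t. apply cont_eps. intros eps He.
    destruct (pow2_big (2 * M * h) (eps / 3) ltac:(lra)) as [k Hk].
    pose proof (picard_cont Sl G u0 h L k HL ltac:(lra) HG j t) as Hc.
    destruct (proj1 (cont_eps _ _) Hc (eps / 3) ltac:(lra)) as [d [Hd Hd']].
    exists d. split; [exact Hd|]. intros y Hy. specialize (Hd' y Hy).
    pose proof (HY y j k). pose proof (HY t j k).
    replace (Y y j - Y t j) with ((Y y j - picard Sl G u0 h k y j) + (picard Sl G u0 h k y j - picard Sl G u0 h k t j) - (Y t j - picard Sl G u0 h k t j)) by ring.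
    eapply Rle_lt_trans. apply Rabs_triang. rewrite Rabs_Ropp.
    pose proof (Rabs_triang (Y y j - picard Sl G u0 h k y j) (picard Sl G u0 h k y j - picard Sl G u0 h k t j)). lra. }
  exists Y. split; [|split; [|split]].
  - intros t j Hj. apply Hconst. intro k. apply picard_off; auto.
  - intros j. apply Hconst. intro k. apply picard_zero. lra.
  - exact Hcont.
  - intros t j Hj. apply Rminus_diag_uniq. apply Rabs_eq_0. apply half_zero with (2 * M * h). apply Rabs_pos.
    intro k.
    assert (CY : contR (fun s => G (Y s) j)).
    { apply (contG Sl G L Y j HL). intros; apply HG; auto. intros; apply Hcont. }
    assert (Ck : contR (fun s => G (picard Sl G u0 h k s) j)).
    { apply (contG Sl G L _ j HL). intros; apply HG; auto. intros; apply (picard_cont Sl G u0 h L); auto; lra. }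
    pose proof (HY t j (Datatypes.S k)) as H1.
    change (picard Sl G u0 h (Datatypes.S k) t j) with
      (if memb j Sl then u0 j + RInt (fun s => G (picard Sl G u0 h k s) j) 0 (clampR 0 h t) else u0 j) in H1.
    rewrite (proj2 (memb_In j Sl) Hj) in H1.
    pose proof (clampR_in 0 h t ltac:(lra)) as Hc.
    assert (H2 : Rabs (RInt (fun s => G (picard Sl G u0 h k s) j - G (Y s) j) 0 (clampR 0 h t)) <= h * (L * (INR (length Sl) * (2 * M * h / 2 ^ k)))).
    { eapply Rle_trans. apply RInt_bound.
      - intro x. apply (continuous_minus (fun s => G (picard Sl G u0 h k s) j) (fun s => G (Y s) j)); auto.
      - lra.
      - intros s _. eapply Rle_trans. apply HG; auto. apply Rmult_le_compat_l; auto.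
        rewrite Nd_sym. apply sumL_bound. intros j' _. apply HY.
      - apply Rmult_le_compat_r; [|lra]. apply Rmult_le_pos; auto. apply Rmult_le_pos; auto.
        apply Rdiv_le_0_compat; auto. }
    rewrite RInt_minusR in H2 by (apply exRInt_c; auto).
    replace (Y t j - (u0 j + RInt (fun s => G (Y s) j) 0 (clampR 0 h t))) with
      ((Y t j - (u0 j + RInt (fun s => G (picard Sl G u0 h k s) j) 0 (clampR 0 h t))) +
       (RInt (fun s => G (picard Sl G u0 h k s) j) 0 (clampR 0 h t) - RInt (fun s => G (Y s) j) 0 (clampR 0 h t))) by ring.
    eapply Rle_trans. apply Rabs_triang.
    replace (2 ^ Datatypes.S k) with (2 * 2 ^ k) in H1 by (simpl; ring).
    replace (2 * M * h / (2 * 2 ^ k)) with (M * h / 2 ^ k) in H1 by (field; apply Rgt_not_eq, Hp).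
    replace (h * (L * (INR (length Sl) * (2 * M * h / 2 ^ k)))) with ((INR (length Sl) * L * h) * (2 * (M * h / 2 ^ k))) in H2 by (field; apply Rgt_not_eq, Hp).
    replace (2 * M * h / 2 ^ k) with (2 * (M * h / 2 ^ k)) by (field; apply Rgt_not_eq, Hp).
    assert (0 <= M * h / 2 ^ k) by (apply Rdiv_le_0_compat; [nra|auto]).
    assert ((INR (length Sl) * L * h) * (2 * (M * h / 2 ^ k)) <= 1/2 * (2 * (M * h / 2 ^ k))) by (apply Rmult_le_compat_r; lra).
    lra.
Qed.

Definition clampV (Sl : list nat) (u0 : nat -> R) (d : R) (u : nat -> R) : nat -> R :=
  fun j => if memb j Sl then clampR (u0 j - d) (u0 j + d) (u j) else u0 j.

Lemma clampV_agree Sl u0 d u : agree Sl u0 (clampV Sl u0 d u).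
Proof. intros j Hj. unfold clampV. rewrite memb_false; auto. Qed.

Lemma clampV_close Sl u0 d u : 0 <= d -> close Sl d u0 (clampV Sl u0 d u).
Proof.
  intros Hd j Hj. unfold clampV. rewrite (proj2 (memb_In j Sl) Hj).
  pose proof (clampR_in (u0 j - d) (u0 j + d) (u j) ltac:(lra)). apply Rabs_le. lra.
Qed.

Lemma clampV_Nd Sl u0 d u v : 0 <= d -> Nd Sl (clampV Sl u0 d u) (clampV Sl u0 d v) <= Nd Sl u v.
Proof.
  intros Hd. apply sumL_le. intros j Hj. unfold clampV. rewrite (proj2 (memb_In j Sl) Hj).
  apply clampR_lip. lra.
Qed.

Lemma clampV_id Sl u0 d u : agree Sl u0 u -> close Sl d u0 u -> clampV Sl u0 d u = u.
Proof.
  intros Ha Hc. apply functional_extensionality. intro j. unfold clampV.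
  destruct (memb j Sl) eqn:E.
  - apply memb_In in E. specialize (Hc j E). apply Rabs_le_between in Hc. apply clampR_id. lra.
  - rewrite Ha; auto. intro Hj. apply memb_In in Hj. congruence.
Qed.

Lemma is_derive_add_const (f : R -> R) z l c : is_derive f z l -> is_derive (fun x => c + f x) z l.
Proof.
  intros H. apply is_derive_eps. intros eps He. destruct (proj1 (is_derive_eps _ _ _) H eps He) as [d [Hd Hd']].
  exists d. split; [exact Hd|]. intros h Hh Hhd. replace (c + f (z + h) - (c + f z)) with (f (z + h) - f z) by ring.
  apply Hd'; auto.
Qed.

Lemma small_prod q e : 0 <= q -> 0 <= e -> e <= 1 / (2 * (q + 1)) -> q * e <= 1 / 2.
Proof.
  intros Hq He H. apply Rle_trans with (q * (1 / (2 * (q + 1)))). apply Rmult_le_compat_l; auto.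
  apply Rmult_le_reg_r with (2 * (q + 1)). nra.
  replace (q * (1 / (2 * (q + 1))) * (2 * (q + 1))) with q by (field; nra). nra.
Qed.

Lemma ode_exist Sl F u0 d L :
  0 < d -> 0 <= L ->
  (forall u v, agree Sl u0 u -> agree Sl u0 v -> close Sl d u0 u -> close Sl d u0 v ->
     forall j, In j Sl -> Rabs (F u j - F v j) <= L * Nd Sl u v) ->
  exists h, 0 < h /\ exists Y : R -> nat -> R,
    (forall t, agree Sl u0 (Y t)) /\
    (forall t, close Sl d u0 (Y t)) /\
    (forall j, Y 0 j = u0 j) /\
    (forall z, 0 <= z <= h -> forall j, In j Sl -> has_deriv_within h (fun s => Y s j) z (F (Y z) j)) /\
    (forall j, In j Sl -> Rabs (Y h j - u0 j - h * F u0 j) <= h * (L * (INR (length Sl) * d))).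
Proof.
  intros Hd HL HF.
  pose proof (pos_INR (length Sl)) as Hn.
  set (n := INR (length Sl)) in *.
  set (G := fun u => F (clampV Sl u0 d u)).
  set (M := sumL Sl (fun j => Rabs (F u0 j)) + L * (n * d)).
  assert (HG : forall u v j, In j Sl -> Rabs (G u j - G v j) <= L * Nd Sl u v).
  { intros u v j Hj. unfold G. eapply Rle_trans. apply HF; [apply clampV_agree|apply clampV_agree|apply clampV_close; lra|apply clampV_close; lra|exact Hj].
    apply Rmult_le_compat_l; auto. apply clampV_Nd; lra. }
  assert (HM0 : 0 <= M). { unfold M. pose proof (sumL_ge0 Sl (fun j => Rabs (F u0 j)) (fun j _ => Rabs_pos _)). assert (0 <= L * (n * d)) by (apply Rmult_le_pos; [lra| apply Rmult_le_pos; lra]). lra. }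
  assert (HM : forall u j, In j Sl -> Rabs (G u j) <= M).
  { intros u j Hj. unfold G, M.
    pose proof (HF (clampV Sl u0 d u) u0 (clampV_agree _ _ _ _) (agree_refl _ _) (clampV_close Sl u0 d u ltac:(lra)) (close_refl Sl d u0 ltac:(lra)) j Hj).
    pose proof (Nd_close Sl d u0 _ (clampV_close Sl u0 d u ltac:(lra))).
    pose proof (sumL_term Sl (fun j => Rabs (F u0 j)) j (fun j _ => Rabs_pos _) Hj). simpl in H1.
    pose proof (Rabs_triang_inv (F (clampV Sl u0 d u) j) (F u0 j)).
    assert (L * Nd Sl (clampV Sl u0 d u) u0 <= L * (n * d)) by (apply Rmult_le_compat_l; auto).
    lra. }
  set (h := Rmin (d / (M + 1)) (1 / (2 * (n * L + 1)))).
  assert (Hh1 : h <= d / (M + 1)) by apply Rmin_l.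
  assert (Hh2 : h <= 1 / (2 * (n * L + 1))) by apply Rmin_r.
  assert (Hh : 0 < h). { apply Rmin_pos; apply Rdiv_lt_0_compat; nra. }
  assert (HnLh : n * L * h <= 1 / 2) by (apply small_prod; nra).
  assert (HhM : h * M <= d).
  { apply Rle_trans with (d / (M + 1) * M). apply Rmult_le_compat_r; auto.
    replace (d / (M + 1) * M) with (d - d / (M + 1)) by (field; lra).
    assert (0 < d / (M + 1)) by (apply Rdiv_lt_0_compat; lra). lra. }
  destruct (picard_limit Sl G u0 h L M HG HM HM0 HL Hh HnLh) as [Y [Yag [Y0 [Ycont Yint]]]].
  assert (Yclose : forall t, close Sl d u0 (Y t)).
  { intros t j Hj. rewrite (Yint t j Hj). rewrite Rpm1.
    pose proof (clampR_in 0 h t ltac:(lra)) as Hc.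
    eapply Rle_trans. apply RInt_bound.
    - apply (contG Sl G L Y j HL). intros; apply HG; auto. intros; apply Ycont.
    - lra.
    - intros s _. apply HM; auto.
    - apply Rle_trans with (h * M); auto. apply Rmult_le_compat_r; lra. }
  assert (YG : forall s j, G (Y s) j = F (Y s) j).
  { intros s j. unfold G. rewrite (clampV_id Sl u0 d (Y s) (Yag s) (Yclose s)). reflexivity. }
  assert (Cg : forall j, In j Sl -> contR (fun s => G (Y s) j)).
  { intros j Hj. apply (contG Sl G L Y j HL). intros; apply HG; auto. intros; apply Ycont. }
  exists h. split; [exact Hh|]. exists Y. split; [exact Yag|]. split; [exact Yclose|]. split; [exact Y0|]. split.
  - intros z Hz j Hj. rewrite <- YG.
    apply hdw_ext with (fun x => u0 j + RInt (fun s => G (Y s) j) 0 x); auto.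
    + intros s Hs. rewrite (Yint s j Hj). rewrite clampR_id; auto.
    + apply is_derive_hdw. apply is_derive_add_const. apply FTC. apply Cg; auto.
  - intros j Hj. rewrite (Yint h j Hj). rewrite clampR_id by lra. rewrite Rpm1.
    rewrite <- (RInt_const0 (F u0 j) h).
    rewrite <- RInt_minusR by (apply exRInt_c; auto; intro; apply continuous_const).
    apply RInt_bound; [| lra |].
    + intro x. apply (continuous_minus (fun s => G (Y s) j) (fun _ => F u0 j)). apply Cg; auto. apply continuous_const.
    + intros s _. rewrite YG. eapply Rle_trans. apply HF; [exact (Yag s)|apply agree_refl|exact (Yclose s)|apply close_refl; lra|exact Hj].
      apply Rmult_le_compat_l; auto. apply Nd_close; auto.
Qed.


Lemma Forall2_nth_iff {A B} (P : A -> B -> Prop) l1 l2 d1 d2 :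
  List.Forall2 P l1 l2 <-> length l1 = length l2 /\ forall k, (k < length l1)%nat -> P (nth k l1 d1) (nth k l2 d2).
Proof.
  revert l2. induction l1 as [|a l1 IH]; intros [|b l2]; simpl.
  - split; [intros; split; auto; intros; lia| constructor].
  - split; [intro H; inversion H| intros [H _]; discriminate].
  - split; [intro H; inversion H| intros [H _]; discriminate].
  - split.
    + intro H. inversion H; subst. apply IH in H5. destruct H5 as [Hl Hk]. split. auto.
      intros [|k] Hk'. auto. apply Hk. lia.
    + intros [Hl Hk]. constructor. apply (Hk O). lia. apply IH. split. lia. intros k Hk'. apply (Hk (Datatypes.S k)). lia.
Qed.

Lemma In_nth_ex (l : list nat) j : In j l -> exists k, (k < length l)%nat /\ nth k l O = j.
Proof. intros H. destruct (In_nth l j O H) as [k [Hk Hn]]. exists k. auto. Qed.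

Lemma lookup_nth l1 l2 k : NoDup l1 -> length l2 = length l1 -> (k < length l1)%nat ->
  lookup l1 l2 (nth k l1 O) = nth k l2 O.
Proof.
  revert l2 k. induction l1 as [|a l1 IH]; intros [|b l2] k Hnd Hl Hk; simpl in *; try lia.
  inversion Hnd; subst. destruct k as [|k].
  - rewrite Nat.eqb_refl. auto.
  - destruct (Nat.eqb_spec (nth k l1 O) a) as [E|E].
    + exfalso. apply H1. rewrite <- E. apply nth_In. lia.
    + apply IH; auto; lia.
Qed.

Lemma lookup_notin l1 l2 j : ~ In j l1 -> lookup l1 l2 j = j.
Proof.
  revert l2. induction l1 as [|a l1 IH]; intros [|b l2] H; simpl; auto.
  destruct (Nat.eqb_spec j a). exfalso; apply H; left; auto. apply IH. intro; apply H; right; auto.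
Qed.

Lemma vec_eq_sem {ar} (I : dL_interp ar) w xs ys : length xs = length ys ->
  (fsat I w (vec_eq xs ys) <-> forall k, (k < length xs)%nat -> w (Pl (nth k xs O)) = w (Pl (nth k ys O))).
Proof.
  revert ys. induction xs as [|x xs IH]; intros [|y ys] Hl; simpl in *; try lia.
  - split; intros; [lia| reflexivity].
  - rewrite IH by lia. split.
    + intros [H1 H2] [|k] Hk. auto. apply H2. lia.
    + intros H. split. apply (H O). lia. intros k Hk. apply (H (Datatypes.S k)). lia.
Qed.

Lemma Q2R_0 : Q2R 0%Q = 0.
Proof. unfold Q2R. simpl. lra. Qed.
Lemma Q2R_m1 : Q2R (-1)%Q = -1.
Proof. unfold Q2R. simpl. lra. Qed.

Definition is_run {ar} (I : dL_interp ar) (o : ode) (w : state) (T : R) (phi : R -> state) : Prop :=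
  0 <= T /\
  (forall v, ~ (exists i, In i (ovars o) /\ v = Df i) -> phi 0 v = w v) /\
  forall z, 0 <= z <= T ->
      List.Forall2 (fun i t => phi z (Df i) = teval I (phi z) t) (ovars o) (orhs o) /\
      sf_sat I (phi z) (odom o) /\
      (forall v, ~ (exists i, In i (ovars o) /\ (v = Pl i \/ v = Df i)) ->
                 phi z v = phi 0 v) /\
      (0 < T -> forall i, In i (ovars o) ->
         has_deriv_within T (fun s => phi s (Pl i)) z (phi z (Df i))).

Lemma ode_rel_run {ar} (I : dL_interp ar) o w nu :
  ode_rel I o w nu <-> exists T phi, is_run I o w T phi /\ phi T = nu.
Proof.
  unfold ode_rel, is_run. split.
  - intros [T [phi [H1 [H2 [H3 H4]]]]]. exists T, phi. tauto.
  - intros [T [phi [[H1 [H2 H4]] H3]]]. exists T, phi. tauto.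
Qed.


Lemma rf_init_Pl {ar} (I : dL_interp ar) o w T phi j : is_run I o w T phi -> phi 0 (Pl j) = w (Pl j).
Proof. intros [_ [H _]]. apply H. intros [i [_ E]]. discriminate. Qed.

Lemma rf_Pl {ar} (I : dL_interp ar) o w T phi z j : is_run I o w T phi -> 0 <= z <= T ->
  ~ In j (ovars o) -> phi z (Pl j) = w (Pl j).
Proof.
  intros Hr Hz Hj. destruct Hr as [H0 [Hi Hz']]. destruct (Hz' z Hz) as [_ [_ [Hf _]]].
  rewrite Hf. apply Hi. intros [i [_ E]]; discriminate.
  intros [i [Hi' [E|E]]]; inversion E; subst; auto.
Qed.

Lemma rf_Df {ar} (I : dL_interp ar) o w T phi z j : is_run I o w T phi -> 0 <= z <= T ->
  ~ In j (ovars o) -> phi z (Df j) = w (Df j).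
Proof.
  intros Hr Hz Hj. destruct Hr as [H0 [Hi Hz']]. destruct (Hz' z Hz) as [_ [_ [Hf _]]].
  rewrite Hf. apply Hi. intros [i [Hi' E]]; inversion E; subst; auto.
  intros [i [Hi' [E|E]]]; inversion E; subst; auto.
Qed.

Lemma rf_eq {ar} (I : dL_interp ar) o w T phi z k : is_run I o w T phi -> 0 <= z <= T ->
  (k < length (ovars o))%nat ->
  phi z (Df (nth k (ovars o) O)) = teval I (phi z) (nth k (orhs o) (TConst 0)).
Proof.
  intros Hr Hz Hk. destruct Hr as [_ [_ Hz']]. destruct (Hz' z Hz) as [HF _].
  apply (Forall2_nth_iff _ _ _ O (TConst 0)) in HF. destruct HF as [_ HF]. apply HF; auto.
Qed.

Lemma rf_len {ar} (I : dL_interp ar) o w T phi : is_run I o w T phi -> length (ovars o) = length (orhs o).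
Proof.
  intros Hr. destruct Hr as [H0 [_ Hz']]. destruct (Hz' 0 ltac:(lra)) as [HF _].
  apply (Forall2_nth_iff _ _ _ O (TConst 0)) in HF. tauto.
Qed.

Lemma rf_dom {ar} (I : dL_interp ar) o w T phi z : is_run I o w T phi -> 0 <= z <= T -> sf_sat I (phi z) (odom o).
Proof. intros [_ [_ H]] Hz. apply H; auto. Qed.

Lemma rf_der {ar} (I : dL_interp ar) o w T phi z i : is_run I o w T phi -> 0 <= z <= T -> 0 < T -> In i (ovars o) ->
  has_deriv_within T (fun s => phi s (Pl i)) z (phi z (Df i)).
Proof. intros [_ [_ H]] Hz HT Hi. apply H; auto. Qed.

Lemma rev_run {ar} (I : dL_interp ar) (as_ bs : list nat) (fa fb : list dterm) (Qa Qb : sform) w T psi :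
  NoDup as_ -> NoDup bs -> length bs = length as_ -> (forall j, In j bs -> ~ In j as_) ->
  length fb = length as_ ->
  is_run I (mkODE as_ fa Qa) w T psi ->
  fsat I (psi T) (vec_eq as_ bs) ->
  (forall s1 s2 : state,
     (forall j, s1 (Pl j) = if memb j bs then s2 (Pl (lookup bs as_ j)) else w (Pl j)) ->
     (forall j, ~ In j as_ -> s2 (Pl j) = w (Pl j)) ->
     (forall k, (k < length as_)%nat -> teval I s1 (nth k fb (TConst 0)) = - teval I s2 (nth k fa (TConst 0))) /\
     (sf_sat I s1 Qb <-> sf_sat I s2 Qa)) ->
  exists phi, is_run I (mkODE bs fb Qb) w T phi /\ fsat I (phi T) (vec_eq bs as_).
Proof.
  intros Hnda Hndb Hlb Hdisj Hlf Hrun Hend Hcompat.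
  pose proof (rf_len _ _ _ _ _ Hrun) as Hlfa. simpl in Hlfa.
  set (phi := fun s v => match v with
     | Pl j => if memb j bs then psi (T - s) (Pl (lookup bs as_ j)) else w (Pl j)
     | Df j => if memb j bs then - psi (T - s) (Df (lookup bs as_ j)) else w (Df j) end).
  assert (HT : 0 <= T) by (destruct Hrun; auto).
  assert (Hnb : forall k, (k < length as_)%nat -> In (nth k bs O) bs) by (intros; apply nth_In; lia).
  assert (Hna : forall k, (k < length as_)%nat -> In (nth k as_ O) as_) by (intros; apply nth_In; lia).
  assert (Hlk : forall k, (k < length as_)%nat -> lookup bs as_ (nth k bs O) = nth k as_ O).
  { intros k Hk. apply lookup_nth; auto; lia. }
  assert (Hpsi_off : forall z j, 0 <= z <= T -> ~ In j as_ -> psi z (Pl j) = w (Pl j)).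
  { intros z j Hz Hj. apply (rf_Pl I _ w T psi z j Hrun Hz). simpl; auto. }
  rewrite vec_eq_sem in Hend by lia.
  assert (Hcomp : forall z, 0 <= z <= T ->
     (forall k, (k < length as_)%nat -> teval I (phi z) (nth k fb (TConst 0)) = - teval I (psi (T - z)) (nth k fa (TConst 0))) /\
     (sf_sat I (phi z) Qb <-> sf_sat I (psi (T - z)) Qa)).
  { intros z Hz. apply Hcompat. intro j. reflexivity. intros j Hj. apply Hpsi_off; auto. lra. }
  exists phi. split.
  - split; [exact HT|]. split.
    + intros [j|j] Hv; simpl.
      * destruct (memb j bs) eqn:E; auto.
        apply memb_In in E. destruct (In_nth_ex bs j E) as [k [Hk Hkj]]. subst j.
        rewrite Hlk by lia. replace (T - 0) with T by ring. rewrite (Hend k) by lia.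
        apply Hpsi_off. lra. apply Hdisj. auto.
      * destruct (memb j bs) eqn:E; auto. exfalso. apply Hv. exists j. split; auto. apply memb_In; auto.
    + intros z Hz. simpl ovars; simpl orhs; simpl odom. split; [|split; [|split]].
      * apply (Forall2_nth_iff _ _ _ O (TConst 0)). split. lia.
        intros k Hk. destruct (Hcomp z Hz) as [Hc _]. rewrite (Hc k) by lia.
        simpl. rewrite (proj2 (memb_In _ _) (Hnb k ltac:(lia))). rewrite Hlk by lia.
        pose proof (rf_eq I _ w T psi (T - z) k Hrun ltac:(lra) ltac:(simpl; lia)) as Hq. simpl in Hq.
        rewrite Hq. reflexivity.
      * destruct (Hcomp z Hz) as [_ Hq]. apply Hq. apply (rf_dom I _ w T psi (T - z) Hrun). lra.
      * intros [j|j] Hv; simpl.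
        -- destruct (memb j bs) eqn:E; auto. exfalso. apply Hv. exists j. split. apply memb_In; auto. auto.
        -- destruct (memb j bs) eqn:E; auto. exfalso. apply Hv. exists j. split. apply memb_In; auto. auto.
      * intros HT' i Hi. simpl.
        rewrite (proj2 (memb_In _ _) Hi).
        destruct (In_nth_ex bs i Hi) as [k [Hk Hki]]. rewrite <- Hki. rewrite Hlk by lia.
        apply hdw_ext with (fun s => psi (T - s) (Pl (nth k as_ O))).
        { intros s Hs. simpl. try rewrite (proj2 (memb_In _ _) (Hnb k ltac:(lia))). try rewrite Hlk by lia. reflexivity. }
        { auto. }
        pose proof (hdw_rev T (fun s => psi s (Pl (nth k as_ O))) (T - z) (psi (T - z) (Df (nth k as_ O))) ltac:(lra)) as Hr.
        replace (T - (T - z)) with z in Hr by ring. apply Hr.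
        apply (rf_der I _ w T psi (T - z) _ Hrun ltac:(lra) HT'). simpl. apply Hna. lia.
  - apply vec_eq_sem. lia. intros k Hk. simpl.
    rewrite (proj2 (memb_In _ _) (Hnb k ltac:(lia))). rewrite Hlk by lia.
    destruct (memb (nth k as_ O) bs) eqn:E.
    { exfalso. apply memb_In in E. apply (Hdisj _ E). apply Hna. lia. }
    replace (T - T) with 0 by ring. rewrite (rf_init_Pl I _ w T psi _ Hrun). auto.
Qed.


Fixpoint fof (xs : list nat) (f : list dterm) (j : nat) : dterm :=
  match xs, f with
  | x :: xs', t :: f' => if Nat.eqb j x then t else fof xs' f' j
  | _, _ => TConst 0
  end.

Lemma fof_nth xs f k : NoDup xs -> length f = length xs -> (k < length xs)%nat ->
  fof xs f (nth k xs O) = nth k f (TConst 0).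
Proof.
  revert f k. induction xs as [|x xs IH]; intros [|t f] k Hnd Hl Hk; simpl in *; try lia.
  inversion Hnd; subst. destruct k as [|k].
  - rewrite Nat.eqb_refl. auto.
  - destruct (Nat.eqb_spec (nth k xs O) x) as [E|E].
    + exfalso. apply H1. rewrite <- E. apply nth_In. lia.
    + apply IH; auto; lia.
Qed.

Lemma fof_in xs f j : length f = length xs -> In j xs -> In (fof xs f j) f.
Proof.
  revert f. induction xs as [|x xs IH]; intros [|t f] Hl Hj; simpl in *; try lia; try contradiction.
  destruct (Nat.eqb_spec j x). auto. right. apply IH. lia. destruct Hj; auto. subst; contradiction.
Qed.

Definition Fv {ar} (I : dL_interp ar) (xs : list nat) (f : list dterm) (u : nat -> R) (j : nat) : R :=
  teval I (st u) (fof xs f j).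

Lemma list_bound (Sl : list nat) (P : nat -> R -> Prop) :
  (forall j L L', P j L -> L <= L' -> P j L') ->
  (forall j, In j Sl -> exists L, P j L) ->
  exists L, 0 <= L /\ forall j, In j Sl -> P j L.
Proof.
  intros Hm. induction Sl as [|a Sl IH]; intros H.
  - exists 0. split. lra. intros j [].
  - destruct (H a (or_introl eq_refl)) as [La Pa].
    destruct IH as [Ll [HLl Pl']]. { intros j Hj. apply H. right; auto. }
    exists (Rmax La Ll). split. eapply Rle_trans; [exact HLl| apply Rmax_r].
    intros j [<-|Hj].
    + apply Hm with La; auto. apply Rmax_l.
    + apply Hm with Ll; auto. apply Rmax_r.
Qed.

Lemma Fv_vlip {ar} (I : dL_interp ar) xs f u0 :
  List.Forall dfree_term f -> List.Forall (wf_term ar) f -> length f = length xs ->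
  VLip xs (Fv I xs f) u0.
Proof.
  intros Hd Hw Hl us Hus.
  assert (Hag : forall u, agree xs u0 u -> agree xs us u).
  { intros u Hu j Hj. rewrite Hu, Hus; auto. }
  destruct (list_delta xs (fun j d => exists L, forall u v, agree xs us u -> agree xs us v ->
      close xs d us u -> close xs d us v -> Rabs (Fv I xs f u j - Fv I xs f v j) <= L * Nd xs u v)) as [d [Hd0 Hq]].
  { intros j d d' [L HL] Hd'. exists L. intros u v Hu Hv Cu Cv. apply HL; auto; eapply close_mono; eauto; lra. }
  { intros j Hj. pose proof (fof_in xs f j Hl Hj) as Hin. rewrite Forall_forall in Hd, Hw.
    destruct (term_lip I xs (fof xs f j) (Hd _ Hin) (Hw _ Hin) us) as [d [Hd0 [L [HL0 HL]]]].
    exists d. split; [exact Hd0|]. exists L. exact HL. }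
  destruct (list_bound xs (fun j L => forall u v, agree xs us u -> agree xs us v ->
      close xs d us u -> close xs d us v -> Rabs (Fv I xs f u j - Fv I xs f v j) <= L * Nd xs u v)) as [L [HL0 HL]].
  { intros j L L' H HLL u v Hu Hv Cu Cv. eapply Rle_trans. apply H; auto. apply Rmult_le_compat_r; auto. apply Nd_ge0. }
  { intros j Hj. apply Hq; auto. }
  exists d. split; [exact Hd0|]. exists L. split; [exact HL0|].
  intros u v Hu Hv Cu Cv j Hj. apply HL; auto.
Qed.

Lemma fsat_iff {ar} (I : dL_interp ar) w A B : fsat I w (FIff A B) <-> (fsat I w A <-> fsat I w B).
Proof.
  unfold FIff, FImp. simpl. split; intro H; [tauto|].
  destruct (classic (fsat I w A)); destruct (classic (fsat I w B)); tauto.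
Qed.

Lemma fsat_imp {ar} (I : dL_interp ar) w A B : fsat I w (FImp A B) <-> (fsat I w A -> fsat I w B).
Proof.
  unfold FImp. simpl. split; intro H; [tauto|]. destruct (classic (fsat I w A)); tauto.
Qed.

Lemma nth_map' {A B} (h : A -> B) l d d' k : (k < length l)%nat -> nth k (map h l) d = h (nth k l d').
Proof. intros Hk. rewrite nth_indep with (d' := h d') by (rewrite length_map; auto). apply map_nth. Qed.

Lemma dadj_part {ar} (I : dL_interp ar) xs f ys Q :
  NoDup xs -> length f = length xs -> List.Forall dfree_term f -> NoDup ys -> length ys = length xs ->
  (forall y, In y ys -> ~ In y xs /\ forall t, In t f -> ~ occurs_term y t) ->
  dfree_sf Q -> (forall y, In y ys -> ~ occurs_sf y Q) ->
  valid I (FIff (FDia (mkODE xs f Q) (vec_eq xs ys))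
                (FDia (mkODE ys (map (fun t => TNeg (ren_term (lookup xs ys) t)) f) (ren_sf (lookup xs ys) Q))
                      (vec_eq ys xs))).
Proof.
  intros Hxs Hlen Hfdf Hys Hylen Hfresh HQd HQo w. apply fsat_iff.
  set (g := map (fun t => TNeg (ren_term (lookup xs ys) t)) f).
  assert (Hgl : length g = length xs) by (unfold g; rewrite length_map; auto).
  assert (Hlk : forall k, (k < length xs)%nat -> lookup xs ys (nth k xs O) = nth k ys O).
  { intros; apply lookup_nth; auto. }
  assert (Hlk' : forall k, (k < length xs)%nat -> lookup ys xs (nth k ys O) = nth k xs O).
  { intros; apply lookup_nth; auto; lia. }
  assert (Hocc : forall k j, (k < length xs)%nat -> occurs_term j (nth k f (TConst 0)) -> ~ In j ys).
  { intros k j Hk Ho Hj. apply (proj2 (Hfresh j Hj) (nth k f (TConst 0))); auto. apply nth_In; lia. }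
  assert (Hdfk : forall k, (k < length xs)%nat -> dfree_term (nth k f (TConst 0))).
  { intros k Hk. rewrite Forall_forall in Hfdf. apply Hfdf. apply nth_In; lia. }
  assert (Hgk : forall k (s : state), (k < length xs)%nat ->
     teval I s (nth k g (TConst 0)) = - teval I s (ren_term (lookup xs ys) (nth k f (TConst 0)))).
  { intros k s Hk. unfold g. rewrite (nth_map' _ _ _ (TConst 0)) by lia. simpl. rewrite Q2R_m1. ring. }
  split.
  - intros [nu [R Hv]]. apply ode_rel_run in R. destruct R as [T [psi [Hr HT]]]. subst nu.
    destruct (rev_run I xs ys f g Q (ren_sf (lookup xs ys) Q) w T psi Hxs Hys Hylen
      (fun j Hj => proj1 (Hfresh j Hj)) Hgl Hr Hv) as [phi [Hr' Hv']].
    + intros s1 s2 H1 H2.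
      assert (C : forall j, ~ In j ys -> s1 (Pl (lookup xs ys j)) = s2 (Pl j)).
      { intros j Hj. destruct (in_dec Nat.eq_dec j xs) as [Hx|Hx].
        - destruct (In_nth_ex xs j Hx) as [k [Hk Hkj]]. subst j. rewrite Hlk by auto.
          rewrite H1. rewrite (proj2 (memb_In _ _) (nth_In ys O (ltac:(rewrite Hylen; exact Hk) : (k < length ys)%nat))). rewrite Hlk' by auto. auto.
        - rewrite lookup_notin by auto. rewrite H1. rewrite memb_false by auto. rewrite H2; auto. }
      split.
      * intros k Hk. rewrite Hgk by auto. f_equal. apply teval_ren; auto.
        intros j Hj. apply C. eapply Hocc; eauto.
      * apply sf_ren; auto. intros j Hj. apply C. intro Hy. apply (HQo j Hy Hj).
    + exists (phi T). split; auto. apply ode_rel_run. exists T, phi. split; auto.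
  - intros [nu [R Hv]]. apply ode_rel_run in R. destruct R as [T [psi [Hr HT]]]. subst nu.
    destruct (rev_run I ys xs g f (ren_sf (lookup xs ys) Q) Q w T psi Hys Hxs ltac:(lia)
      (fun j Hj Hy => proj1 (Hfresh j Hy) Hj) ltac:(lia) Hr Hv) as [phi [Hr' Hv']].
    + intros s1 s2 H1 H2.
      assert (C : forall j, ~ In j ys -> s2 (Pl (lookup xs ys j)) = s1 (Pl j)).
      { intros j Hj. rewrite H1. destruct (memb j xs) eqn:E; auto.
        rewrite lookup_notin. rewrite H2; auto. intro Hx. apply memb_In in Hx. congruence. }
      split.
      * intros k Hk. rewrite Hylen in Hk. rewrite Hgk by auto. rewrite Ropp_involutive. symmetry. apply teval_ren; auto.
        intros j Hj. apply C. eapply Hocc; eauto.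
      * symmetry. apply sf_ren; auto. intros j Hj. apply C. intro Hy. apply (HQo j Hy Hj).
    + exists (phi T). split; auto. apply ode_rel_run. exists T, phi. split; auto.
Qed.


Lemma run_Fv {ar} (I : dL_interp ar) xs f Q w T phi z j :
  NoDup xs -> length f = length xs -> List.Forall dfree_term f ->
  is_run I (mkODE xs f Q) w T phi -> 0 <= z <= T -> In j xs ->
  phi z (Df j) = Fv I xs f (fun i => phi z (Pl i)) j.
Proof.
  intros Hnd Hl Hd Hr Hz Hj. destruct (In_nth_ex xs j Hj) as [k [Hk Hkj]]. subst j.
  pose proof (rf_eq I _ w T phi z k Hr Hz Hk) as E. simpl in E. rewrite E.
  unfold Fv. rewrite fof_nth by auto. apply teval_agree.
  rewrite Forall_forall in Hd. apply Hd. apply nth_In. lia.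
  intros; reflexivity.
Qed.

Lemma runs_agree {ar} (I : dL_interp ar) xs f Q1 Q2 w T1 T2 phi1 phi2 :
  NoDup xs -> length f = length xs -> List.Forall dfree_term f -> List.Forall (wf_term ar) f ->
  is_run I (mkODE xs f Q1) w T1 phi1 -> is_run I (mkODE xs f Q2) w T2 phi2 -> T1 <= T2 ->
  forall z, 0 <= z <= T1 -> phi1 z = phi2 z.
Proof.
  intros Hnd Hl Hd Hw R1 R2 HT.
  assert (Hu : forall z, 0 <= z <= T1 -> forall j, In j xs -> phi1 z (Pl j) = phi2 z (Pl j)).
  { apply (ode_unique xs (Fv I xs f) (fun j => w (Pl j)) T1 (fun z j => phi1 z (Pl j)) (fun z j => phi2 z (Pl j))).
    - apply Fv_vlip; auto.
    - intros z Hz. split; intros j Hj; simpl.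
      + apply (rf_Pl I _ w T1 phi1 z j R1 Hz Hj).
      + apply (rf_Pl I _ w T2 phi2 z j R2 ltac:(lra) Hj).
    - intros j Hj. rewrite (rf_init_Pl I _ w T1 phi1 j R1), (rf_init_Pl I _ w T2 phi2 j R2). auto.
    - intros HT1 z Hz j Hj. split.
      + rewrite <- (run_Fv I xs f Q1 w T1 phi1 z j); auto. apply (rf_der I _ w T1 phi1 z j R1 Hz HT1 Hj).
      + rewrite <- (run_Fv I xs f Q2 w T2 phi2 z j); auto; [|lra].
        apply hdw_restrict with T2; auto. apply (rf_der I _ w T2 phi2 z j R2 ltac:(lra) ltac:(lra) Hj). }
  intros z Hz.
  assert (HP : (fun i => phi1 z (Pl i)) = (fun i => phi2 z (Pl i))).
  { apply functional_extensionality. intro j. destruct (in_dec Nat.eq_dec j xs) as [Hj|Hj].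
    apply Hu; auto. rewrite (rf_Pl I _ w T1 phi1 z j R1 Hz Hj), (rf_Pl I _ w T2 phi2 z j R2 ltac:(lra) Hj). auto. }
  apply functional_extensionality. intros [j|j].
  - exact (equal_f HP j).
  - destruct (in_dec Nat.eq_dec j xs) as [Hj|Hj].
    + rewrite (run_Fv I xs f Q1 w T1 phi1 z j), (run_Fv I xs f Q2 w T2 phi2 z j); auto; try lra. rewrite HP. auto.
    + rewrite (rf_Df I _ w T1 phi1 z j R1 Hz Hj), (rf_Df I _ w T2 phi2 z j R2 ltac:(lra) Hj). auto.
Qed.

Lemma run_dom {ar} (I : dL_interp ar) xs f Q Q' w T phi :
  is_run I (mkODE xs f Q) w T phi -> (forall z, 0 <= z <= T -> sf_sat I (phi z) Q') ->
  is_run I (mkODE xs f Q') w T phi.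
Proof.
  intros [H0 [Hi Hz]] HQ. split; auto. split; auto. intros z Hzz. destruct (Hz z Hzz) as [A [B [C D]]].
  simpl in *. split; auto.
Qed.

Lemma uniq_part {ar} (I : dL_interp ar) xs f :
  NoDup xs -> length f = length xs -> List.Forall dfree_term f -> List.Forall (wf_term ar) f ->
  forall (Q1 Q2 : sform) (P : fml),
     valid I (FIff (FAnd (FDia (mkODE xs f Q1) P) (FDia (mkODE xs f Q2) P))
                   (FDia (mkODE xs f (SAnd Q1 Q2)) P)).
Proof.
  intros Hnd Hl Hd Hw Q1 Q2 P w. apply fsat_iff. split.
  - intros [[nu1 [R1 P1]] [nu2 [R2 P2]]].
    apply ode_rel_run in R1. destruct R1 as [T1 [phi1 [R1 E1]]].
    apply ode_rel_run in R2. destruct R2 as [T2 [phi2 [R2 E2]]].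
    destruct (Rle_lt_dec T1 T2) as [HT|HT].
    + exists nu1. split; auto. apply ode_rel_run. exists T1, phi1. split; auto.
      apply run_dom with Q1; auto. intros z Hz. split. apply (rf_dom I _ w T1 phi1 z R1 Hz).
      rewrite (runs_agree I xs f Q1 Q2 w T1 T2 phi1 phi2 Hnd Hl Hd Hw R1 R2 HT z Hz).
      apply (rf_dom I _ w T2 phi2 z R2). lra.
    + exists nu2. split; auto. apply ode_rel_run. exists T2, phi2. split; auto.
      apply run_dom with Q2; auto. intros z Hz. split.
      rewrite (runs_agree I xs f Q2 Q1 w T2 T1 phi2 phi1 Hnd Hl Hd Hw R2 R1 ltac:(lra) z Hz).
      apply (rf_dom I _ w T1 phi1 z R1). lra.
      apply (rf_dom I _ w T2 phi2 z R2 Hz).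
  - intros [nu [R HP]]. apply ode_rel_run in R. destruct R as [T [phi [R E]]].
    split; exists nu; split; auto; apply ode_rel_run; exists T, phi; split; auto.
    + apply run_dom with (SAnd Q1 Q2); auto. intros z Hz. apply (rf_dom I _ w T phi z R Hz).
    + apply run_dom with (SAnd Q1 Q2); auto. intros z Hz. apply (rf_dom I _ w T phi z R Hz).
Qed.


Lemma cont_part {ar} (I : dL_interp ar) xs f ys :
  NoDup xs -> length f = length xs -> List.Forall dfree_term f -> List.Forall (wf_term ar) f ->
  length ys = length xs ->
  (forall y, In y ys -> ~ In y xs /\ forall t, In t f -> ~ occurs_term y t) ->
  forall e : dterm,
     dfree_term e -> wf_term ar e -> (forall y, In y ys -> ~ occurs_term y e) ->
     (forall w : state, exists t, In t f /\ teval I w t <> 0) ->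
     valid I (FImp (vec_eq xs ys)
                   (FIff (FDia (mkODE xs f (SCmp CGt e (TConst 0%Q))) (FNot (vec_eq xs ys)))
                         (FCmp CGt e (TConst 0%Q)))).
Proof.
  intros Hnd Hl Hd Hw Hyl Hfresh e Hed Hew Heo Hnz w.
  apply fsat_imp. intro Hv. apply fsat_iff. split.
  - intros [nu [R _]]. apply ode_rel_run in R. destruct R as [T [phi [R _]]].
    assert (HT : 0 <= T) by (destruct R; auto).
    pose proof (rf_dom I _ w T phi 0 R ltac:(lra)) as Hdom. simpl in Hdom |- *.
    rewrite (teval_agree I w (phi 0) e Hed); auto.
    intros j _. symmetry. apply (rf_init_Pl I _ w T phi j R).
  - simpl. rewrite Q2R_0. intro He.
    set (u0 := fun j => w (Pl j)).
    assert (Hst : forall t, dfree_term t -> teval I (st u0) t = teval I w t).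
    { intros t Ht. apply teval_agree; auto. }
    destruct (Hnz w) as [t0 [Ht0 Ht0nz]].
    destruct (In_nth (A := dterm) f t0 (TConst 0) Ht0) as [k0 [Hk0 Hkt]].
    set (j0 := nth k0 xs O).
    assert (Hj0 : In j0 xs) by (apply nth_In; lia).
    set (c := Fv I xs f u0 j0).
    assert (Hc : c <> 0).
    { unfold c, Fv, j0. rewrite fof_nth by (auto; lia). rewrite Hkt. rewrite Hst; auto.
      rewrite Forall_forall in Hd; auto. }
    assert (Hcp : 0 < Rabs c) by (apply Rabs_pos_lt; auto).
    destruct (term_lip I xs e Hed Hew u0) as [de [Hde [Le [HLe HeL]]]].
    destruct (Fv_vlip I xs f u0 Hd Hw Hl u0 (agree_refl _ _)) as [dF [HdF [LF [HLF HFL]]]].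
    set (e0 := teval I (st u0) e).
    assert (He0 : 0 < e0) by (unfold e0; rewrite Hst; auto; lra).
    pose proof (pos_INR (length xs)) as Hn.
    set (n := INR (length xs)) in *.
    set (r1 := e0 / (2 * (Le * n + 1))).
    set (r2 := Rabs c / (2 * (LF * n + 1))).
    set (rho := Rmin (Rmin de dF) (Rmin r1 r2)).
    assert (Hr1 : 0 < r1) by (apply Rdiv_lt_0_compat; nra).
    assert (Hr2 : 0 < r2) by (apply Rdiv_lt_0_compat; nra).
    assert (Hrho : 0 < rho) by (repeat apply Rmin_pos; auto).
    assert (Hrde : rho <= de) by (eapply Rle_trans; [apply Rmin_l|apply Rmin_l]).
    assert (HrdF : rho <= dF) by (eapply Rle_trans; [apply Rmin_l|apply Rmin_r]).
    assert (Hrr1 : rho <= r1) by (eapply Rle_trans; [apply Rmin_r|apply Rmin_l]).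
    assert (Hrr2 : rho <= r2) by (eapply Rle_trans; [apply Rmin_r|apply Rmin_r]).
    assert (HLen : Le * (n * rho) <= e0 / 2).
    { replace (Le * (n * rho)) with ((Le * n) * rho) by ring.
      apply Rle_trans with ((Le * n) * ((e0 / 2) / (Le * n + 1))).
      - apply Rmult_le_compat_l. nra. replace (e0 / 2 / (Le * n + 1)) with r1 by (unfold r1; field; nra). auto.
      - apply frac_le; nra. }
    assert (HLFn : LF * (n * rho) <= Rabs c / 2).
    { replace (LF * (n * rho)) with ((LF * n) * rho) by ring.
      apply Rle_trans with ((LF * n) * ((Rabs c / 2) / (LF * n + 1))).
      - apply Rmult_le_compat_l. nra. replace (Rabs c / 2 / (LF * n + 1)) with r2 by (unfold r2; field; nra). auto.
      - apply frac_le; nra. }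
    destruct (ode_exist xs (Fv I xs f) u0 rho LF Hrho HLF) as [h [Hh [Y [Yag [Ycl [Y0 [Yder Ybd]]]]]]].
    { intros u v Hu Hv0 Cu Cv j Hj. apply HFL; auto; eapply close_mono; eauto. }
    set (phi := fun s v => match v with
       | Pl j => Y s j
       | Df j => if memb j xs then Fv I xs f (Y s) j else w (Df j) end).
    assert (Hrun : is_run I (mkODE xs f (SCmp CGt e (TConst 0))) w h phi).
    { split; [lra|]. split.
      - intros [j|j] Hv'; simpl.
        + rewrite Y0. reflexivity.
        + destruct (memb j xs) eqn:E; auto. exfalso. apply Hv'. exists j. split; auto. apply memb_In; auto.
      - intros z Hz. simpl. split; [|split; [|split]].
        + apply (Forall2_nth_iff _ _ _ O (TConst 0)). split. lia.
          intros k Hk. rewrite (proj2 (memb_In _ _) (nth_In xs O Hk)).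
          unfold Fv. rewrite fof_nth by auto. apply teval_agree.
          rewrite Forall_forall in Hd. apply Hd. apply nth_In. lia. intros; reflexivity.
        + rewrite Q2R_0. replace (teval I (phi z) e) with (teval I (st (Y z)) e) by (apply teval_agree; auto).
          pose proof (HeL (Y z) u0 (Yag z) (agree_refl _ _) (close_mono _ _ _ _ _ Hrde (Ycl z)) (close_refl xs de u0 ltac:(lra))) as HH.
          pose proof (Nd_close xs rho u0 (Y z) (Ycl z)).
          assert (Le * Nd xs (Y z) u0 <= Le * (n * rho)) by (apply Rmult_le_compat_l; auto).
          apply Rabs_le_between in HH. fold e0 in HH. lra.
        + intros [j|j] Hv'; simpl.
          * rewrite Y0. apply Yag. intro Hj. apply Hv'. exists j. auto.
          * destruct (memb j xs) eqn:E; auto. exfalso. apply Hv'. exists j. split; auto. apply memb_In; auto.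
        + intros _ i Hi. simpl. rewrite (proj2 (memb_In _ _) Hi). apply Yder; auto.
    }
    exists (phi h). split. { apply ode_rel_run. exists h, phi. split; auto. }
    simpl. intro Hv2.
    rewrite vec_eq_sem in Hv, Hv2 by lia.
    assert (Hk0' : (k0 < length xs)%nat) by lia.
    specialize (Hv2 k0 Hk0'). specialize (Hv k0 Hk0'). simpl in Hv2.
    assert (Hy : ~ In (nth k0 ys O) xs) by (apply Hfresh; apply nth_In; lia).
    rewrite (Yag h _ Hy) in Hv2. unfold u0 in Hv2. rewrite <- Hv in Hv2. fold j0 in Hv2.
    specialize (Ybd j0 Hj0). rewrite Hv2 in Ybd. fold (u0 j0) in Ybd.
    replace (u0 j0 - u0 j0 - h * Fv I xs f u0 j0) with (- (h * c)) in Ybd by (unfold c; ring).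
    rewrite Rabs_Ropp, Rabs_mult, (Rabs_right h) in Ybd by lra.
    assert (h * (LF * (n * rho)) <= h * (Rabs c / 2)) by (apply Rmult_le_compat_l; lra).
    fold n in Ybd. nra.
Qed.

From Stdlib Require Import Reals QArith List.
Open Scope R_scope.

Theorem lemma5p1 (ar : nat -> nat) (I : dL_interp ar)
  (xs : list nat) (f : list dterm) (ys : list nat)
  (Hxs : NoDup xs) (Hlen : length f = length xs)
  (Hfdf : List.Forall dfree_term f) (Hfwf : List.Forall (wf_term ar) f)
  (Hys : NoDup ys) (Hylen : length ys = length xs)
  (Hfresh : forall y, In y ys -> ~ In y xs /\ forall t, In t f -> ~ occurs_term y t) :
  (* (Uniq) *)
  (forall (Q1 Q2 : sform) (P : fml),
     dfree_sf Q1 -> wf_sf ar Q1 -> dfree_sf Q2 -> wf_sf ar Q2 -> wf_fml ar P ->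
     valid I (FIff (FAnd (FDia (mkODE xs f Q1) P) (FDia (mkODE xs f Q2) P))
                   (FDia (mkODE xs f (SAnd Q1 Q2)) P)))
  /\
  (* (Cont) *)
  (forall e : dterm,
     dfree_term e -> wf_term ar e -> (forall y, In y ys -> ~ occurs_term y e) ->
     (forall w : state, exists t, In t f /\ teval I w t <> 0) ->
     valid I (FImp (vec_eq xs ys)
                   (FIff (FDia (mkODE xs f (SCmp CGt e (TConst 0%Q))) (FNot (vec_eq xs ys)))
                         (FCmp CGt e (TConst 0%Q)))))
  /\
  (* (Dadj) *)
  (forall Q : sform,
     dfree_sf Q -> wf_sf ar Q -> (forall y, In y ys -> ~ occurs_sf y Q) ->
     valid I (FIff (FDia (mkODE xs f Q) (vec_eq xs ys))
                   (FDia (mkODE ys (map (fun t => TNeg (ren_term (lookup xs ys) t)) f)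
                                   (ren_sf (lookup xs ys) Q))
                         (vec_eq ys xs)))).
Proof.
  split; [|split].
  - intros Q1 Q2 P _ _ _ _ _. apply uniq_part; auto.
  - intros e He1 He2 He3 He4. apply cont_part; auto.
  - intros Q HQ1 HQ2 HQ3. apply dadj_part; auto.
Qed.
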